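(* Let $(\varGamma,C)$ be a split-step SUSYQW (the coin need not be anisotropic). Define the operator on $\ell^2(\mathbb Z)\oplus\ell^2(\mathbb Z)$ \[ \epsilon=\frac{1}{\sqrt2}\begin{pmatrix}\sqrt{1+p} & -\sqrt{1-p}\\ \sqrt{1-p}\,e^{-i\theta}L^* & \sqrt{1+p}\,e^{-i\theta}L^*\end{pmatrix} \] and operators $Q_{\epsilon_\pm}$ on $\ell^2(\mathbb Z)$ by \[ -2iQ_{\epsilon_\pm}=(1\pm p)e^{i\theta}Lb-(1\mp p)e^{-i\theta}\,\overline{b}\,L^*\pm|q|\big(a_2(\cdot+1)-a_1\big), \] where products denote composition with the multiplication operators by $b$, $\overline b$, and by the sequences $a_2(\cdot+1)=(a_2(x+1))_{x}$ and $a_1$. Then $\epsilon$ is unitary and \[ \epsilon^*Q\epsilon=\begin{pmatrix}0 & Q_{\epsilon_-}\\ Q_{\epsilon_+} & 0\end{pmatrix} \] with respect to $\mathcal H=\ell^2(\mathbb Z)\oplus\ell^2(\mathbb Z)$. Moreover, $(\varGamma,C)$ is Fredholm if and only if $Q_{\epsilon_+}$ is a Fredholm operator, and in that case \[ \operatorname{ind}(\varGamma,C)=\operatorname{ind}Q_{\epsilon_+}=\dim\ker Q_{\epsilon_+}-\dim\ker Q_{\epsilon_-}. \]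
   Context: Let $\mathcal H=\ell^2(\mathbb Z,\mathbb C^2)\cong\ell^2(\mathbb Z)\oplus\ell^2(\mathbb Z)$, $L$ the left shift $(L\Psi)(x)=\Psi(x+1)$ on $\ell^2(\mathbb Z)$. A split-step SUSYQW is the pair $\varGamma=\begin{pmatrix} p & qL\\ \overline{q}L^* & -p\end{pmatrix}$, $C=\begin{pmatrix} a_1 & \overline{b}\\ b & a_2\end{pmatrix}$ with $p\in\mathbb R$, $q\in\mathbb C\setminus\{0\}$, $p^2+|q|^2=1$, $\theta=\operatorname{Arg}q$, real sequences $a_1,a_2$ and complex sequence $b$ on $\mathbb Z$ (as multiplication operators) with $a_j(x)^2+|b(x)|^2=1$ and $b(x)(a_1(x)+a_2(x))=0$ for all $x$. $Q=[\varGamma,C]/(2i)$, $H=Q^2$, $\mathcal H_\pm=\ker(\varGamma\mp1)$, $Q_+=Q|_{\mathcal H_+}:\mathcal H_+\to\mathcal H_-$, $H_\pm=H|_{\mathcal H_\pm}$. $(\varGamma,C)$ is Fredholm if $Q_+$ is Fredholm; $\operatorname{ind}(\varGamma,C)=\dim\ker H_+-\dim\ker H_-$. *)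

(* Defs.v *)
From Stdlib Require Import Reals ZArith List.
Set Implicit Arguments.
Open Scope R_scope.

Record Cx := mkCx { cre : R; cim : R }.
Definition C0 : Cx := mkCx 0 0.
Definition RtoC (r : R) : Cx := mkCx r 0.
Definition Ci : Cx := mkCx 0 1.
Definition Cadd (z w : Cx) : Cx := mkCx (cre z + cre w) (cim z + cim w).
Definition Cmul (z w : Cx) : Cx :=
  mkCx (cre z * cre w - cim z * cim w) (cre z * cim w + cim z * cre w).
Definition Cconj (z : Cx) : Cx := mkCx (cre z) (- cim z).
Definition Cnorm2 (z : Cx) : R := cre z * cre z + cim z * cim z.
Definition Cmod (z : Cx) : R := sqrt (Cnorm2 z).
Definition Cinv (z : Cx) : Cx := mkCx (cre z / Cnorm2 z) (- cim z / Cnorm2 z).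
Definition Cexpi (t : R) : Cx := mkCx (cos t) (sin t).
Definition Arg_is (z : Cx) (theta : R) : Prop :=
  z = Cmul (RtoC (Cmod z)) (Cexpi theta) /\ - PI < theta <= PI.

Definition Seq := Z -> Cx.
Definition sadd (f g : Seq) : Seq := fun x => Cadd (f x) (g x).
Definition ssc (c : Cx) (f : Seq) : Seq := fun x => Cmul c (f x).
Definition szero : Seq := fun _ => C0.
Definition ssub (f g : Seq) : Seq := sadd f (ssc (RtoC (-1)) g).
Definition smul (m : Z -> Cx) (f : Seq) : Seq := fun x => Cmul (m x) (f x).
Definition Lsh (f : Seq) : Seq := fun x => f (x + 1)%Z.
Definition Lsh_adj (f : Seq) : Seq := fun x => f (x - 1)%Z.

Fixpoint psumZ (g : Z -> R) (N : nat) : R :=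
  match N with
  | O => g 0%Z
  | S n => psumZ g n + g (Z.of_nat (S n)) + g (- Z.of_nat (S n))%Z
  end.
Fixpoint psumZC (g : Z -> Cx) (N : nat) : Cx :=
  match N with
  | O => g 0%Z
  | S n => Cadd (Cadd (psumZC g n) (g (Z.of_nat (S n)))) (g (- Z.of_nat (S n))%Z)
  end.

Record NSpace := {
  vT :> Type;
  vadd : vT -> vT -> vT;
  vsc : Cx -> vT -> vT;
  vzero : vT;
  pnorm2 : vT -> nat -> R  (* partial sums of the squared l^2 norm *)
}.
Arguments vadd {n}. Arguments vsc {n}. Arguments vzero {n}. Arguments pnorm2 {n}.

Definition pn1 (f : Seq) (N : nat) : R := psumZ (fun x => Cnorm2 (f x)) N.
Definition Sp1 : NSpace := {| vT := Seq; vadd := sadd; vsc := ssc; vzero := szero;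
                               pnorm2 := pn1 |}.
Definition Seq2 := (Seq * Seq)%type.
Definition Sp2 : NSpace :=
  {| vT := Seq2;
     vadd := fun f g => (sadd (fst f) (fst g), sadd (snd f) (snd g));
     vsc := fun c f => (ssc c (fst f), ssc c (snd f));
     vzero := (szero, szero);
     pnorm2 := fun f N => pn1 (fst f) N + pn1 (snd f) N |}.

Section Generic.
Context {V : NSpace}.

Definition vsub (f g : V) : V := vadd f (vsc (RtoC (-1)) g).
Definition sumsq_le (f : V) (r : R) : Prop := forall N, pnorm2 f N <= r.
Definition l2 (f : V) : Prop := exists r, sumsq_le f r.
Definition l2_conv (gs : nat -> V) (g : V) : Prop :=
  forall eps, eps > 0 -> exists K, forall k, (K <= k)%nat -> sumsq_le (vsub (gs k) g) eps.
Definition closed_set (P : V -> Prop) : Prop :=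
  forall (gs : nat -> V) (g : V), (forall k, P (gs k)) -> l2 g -> l2_conv gs g -> P g.

Fixpoint lincomb (cs : list Cx) (vs : list V) : V :=
  match cs, vs with
  | c :: cs', v :: vs' => vadd (vsc c v) (lincomb cs' vs')
  | _, _ => vzero
  end.
Definition lin_indep (vs : list V) : Prop :=
  forall cs, length cs = length vs -> lincomb cs vs = vzero -> Forall (fun c => c = C0) cs.
Definition dim_is (P : V -> Prop) (n : nat) : Prop :=
  exists vs : list V, length vs = n /\ Forall P vs /\ lin_indep vs /\
    (forall f, P f -> exists cs, length cs = n /\ f = lincomb cs vs).
(* dim (S / P) = n, for a subspace P of the subspace S *)
Definition codim_is (P S : V -> Prop) (n : nat) : Prop :=
  exists vs : list V, length vs = n /\ Forall S vs /\
    (forall cs, length cs = n -> P (lincomb cs vs) -> Forall (fun c => c = C0) cs) /\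
    (forall g, S g -> exists cs r, length cs = n /\ P r /\ g = vadd r (lincomb cs vs)).

End Generic.
Definition kernel {V W : NSpace} (dom : V -> Prop) (T : V -> W) : V -> Prop :=
  fun f => dom f /\ T f = vzero.
Definition range {V W : NSpace} (dom : V -> Prop) (T : V -> W) : W -> Prop :=
  fun g => exists f, dom f /\ g = T f.
Definition bounded_on {V W : NSpace} (dom : V -> Prop) (T : V -> W) : Prop :=
  exists M : R, forall f r, dom f -> sumsq_le f r -> sumsq_le (T f) (M * r).
Definition Fredholm {V W : NSpace} (dom : V -> Prop) (cod : W -> Prop) (T : V -> W) : Prop :=
  (forall f, dom f -> cod (T f)) /\ bounded_on dom T /\
  (exists n, dim_is (kernel dom T) n) /\ closed_set (range dom T) /\
  (exists n, codim_is (range dom T) cod n).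
Definition index_is {V W : NSpace} (dom : V -> Prop) (cod : W -> Prop) (T : V -> W) (k : Z) : Prop :=
  exists n c, dim_is (kernel dom T) n /\ codim_is (range dom T) cod c /\
    k = (Z.of_nat n - Z.of_nat c)%Z.

Definition inner_is (f g : Sp2) (z : Cx) : Prop :=
  let s := fun N => psumZC (fun x => Cadd (Cmul (fst f x) (Cconj (fst g x)))
                                          (Cmul (snd f x) (Cconj (snd g x)))) N in
  Un_cv (fun N => cre (s N)) (cre z) /\ Un_cv (fun N => cim (s N)) (cim z).

Definition unitary (U : Sp2 -> Sp2) : Prop :=
  (forall c (f g : Sp2), U (vadd (vsc c f) g) = vadd (vsc c (U f)) (U g)) /\
  (forall f : Sp2, l2 f -> l2 (U f)) /\
  (forall g : Sp2, l2 g -> exists f, l2 f /\ U f = g) /\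
  (forall (f g : Sp2) z, l2 f -> l2 g -> inner_is f g z -> inner_is (U f) (U g) z).

Definition Gam (p : R) (q : Cx) (f : Sp2) : Sp2 :=
  (sadd (ssc (RtoC p) (fst f)) (ssc q (Lsh (snd f))),
   ssub (ssc (Cconj q) (Lsh_adj (fst f))) (ssc (RtoC p) (snd f))).
Definition Coin (a1 a2 : Z -> R) (b : Z -> Cx) (f : Sp2) : Sp2 :=
  (sadd (smul (fun x => RtoC (a1 x)) (fst f)) (smul (fun x => Cconj (b x)) (snd f)),
   sadd (smul b (fst f)) (smul (fun x => RtoC (a2 x)) (snd f))).
Definition Qop (p : R) (q : Cx) (a1 a2 : Z -> R) (b : Z -> Cx) (f : Sp2) : Sp2 :=
  vsc (Cinv (Cmul (RtoC 2) Ci))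
      (vsub (Gam p q (Coin a1 a2 b f)) (Coin a1 a2 b (Gam p q f))).
Definition Hplus (p : R) (q : Cx) (f : Sp2) : Prop := l2 f /\ Gam p q f = f.
Definition Hminus (p : R) (q : Cx) (f : Sp2) : Prop :=
  l2 f /\ Gam p q f = vsc (RtoC (-1)) f.
Definition SUSY_Fredholm p q a1 a2 b : Prop :=
  Fredholm (Hplus p q) (Hminus p q) (Qop p q a1 a2 b).
(* ker H_+ and ker H_-, with H = Q^2 *)
Definition kerHplus p q a1 a2 b (f : Sp2) : Prop :=
  Hplus p q f /\ Qop p q a1 a2 b (Qop p q a1 a2 b f) = vzero.
Definition kerHminus p q a1 a2 b (f : Sp2) : Prop :=
  Hminus p q f /\ Qop p q a1 a2 b (Qop p q a1 a2 b f) = vzero.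

Definition epsop (p theta : R) (f : Sp2) : Sp2 :=
  let s := RtoC (/ sqrt 2) in
  let cp := RtoC (sqrt (1 + p)) in
  let cm := RtoC (sqrt (1 - p)) in
  let e := Cexpi (- theta) in
  (ssc s (ssub (ssc cp (fst f)) (ssc cm (snd f))),
   ssc s (sadd (ssc (Cmul cm e) (Lsh_adj (fst f))) (ssc (Cmul cp e) (Lsh_adj (snd f))))).

(* Q_{eps_+} (sg = 1) and Q_{eps_-} (sg = -1):
   -2i Q = (1 + sg p) e^{i theta} L b - (1 - sg p) e^{-i theta} conj(b) L^*
           + sg |q| (a2(.+1) - a1) *)
Definition Qeps (sg p : R) (q : Cx) (theta : R) (a1 a2 : Z -> R) (b : Z -> Cx) (f : Seq) : Seq :=
  ssc (Cinv (Cmul (RtoC (-2)) Ci))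
    (sadd (ssub (ssc (Cmul (RtoC (1 + sg * p)) (Cexpi theta)) (Lsh (smul b f)))
                (ssc (Cmul (RtoC (1 - sg * p)) (Cexpi (- theta)))
                     (smul (fun x => Cconj (b x)) (Lsh_adj f))))
          (ssc (RtoC (sg * Cmod q)) (smul (fun x => RtoC (a2 (x + 1)%Z - a1 x)) f))).
Definition Qeps_p p q theta a1 a2 b : Sp1 -> Sp1 := Qeps 1 p q theta a1 a2 b.
Definition Qeps_m p q theta a1 a2 b : Sp1 -> Sp1 := Qeps (-1) p q theta a1 a2 b.
Definition Qblock p q theta a1 a2 b (f : Sp2) : Sp2 :=
  (Qeps_m p q theta a1 a2 b (snd f), Qeps_p p q theta a1 a2 b (fst f)).

(* Main.v *)
Require Import Defs.
From Stdlib Require Import Reals ZArith List Lra Lia Psatz FunctionalExtensionality ClassicalEpsilon.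
Open Scope R_scope.

Lemma Cx_ext : forall z w : Cx, cre z = cre w -> cim z = cim w -> z = w.
Proof. intros [a b] [c d]; simpl; intros; subst; reflexivity. Qed.

Lemma pair_ext (u v : Seq2) : (forall x, fst u x = fst v x) -> (forall x, snd u x = snd v x) -> u = v.
Proof. destruct u, v; simpl; intros; f_equal; apply functional_extensionality; auto. Qed.

Definition epsinv (p theta : R) (g : Sp2) : Sp2 :=
  let s := RtoC (/ sqrt 2) in
  let cp := RtoC (sqrt (1 + p)) in
  let cm := RtoC (sqrt (1 - p)) in
  let e := Cexpi theta in
  (ssc s (sadd (ssc cp (fst g)) (ssc (Cmul cm e) (Lsh (snd g)))),
   ssc s (sadd (ssc (RtoC (- sqrt (1 - p))) (fst g)) (ssc (Cmul cp e) (Lsh (snd g))))).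
Definition Jop (f : Sp2) : Sp2 := (fst f, ssc (RtoC (-1)) (snd f)).

Definition good (p : R) (q : Cx) (th : R) : Prop :=
  sqrt (1+p) * sqrt (1+p) = 1+p /\ sqrt (1-p) * sqrt (1-p) = 1-p /\
  Cmod q = sqrt (1+p) * sqrt (1-p) /\ cre q = Cmod q * cos th /\ cim q = Cmod q * sin th.

Ltac crunch_core :=
  simpl; rewrite ?cos_neg, ?sin_neg; rewrite ?Z.sub_add, ?Z.add_simpl_r.

Ltac alg_finish th p H1 H2 :=
  set (r1 := sqrt (1+p)) in *; set (r2 := sqrt (1-p)) in *;
  set (c := cos th) in *; set (s := sin th) in *; set (iw := / sqrt 2) in *;
  assert (H4 : c*c + s*s = 1) by (unfold c, s; pose proof (sin2_cos2 th) as Hsc; unfold Rsqr in Hsc; lra);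
  assert (Hw : iw^2 = /2) by (unfold iw; rewrite pow_inv by (apply Rgt_not_eq, sqrt_lt_R0; lra); rewrite pow2_sqrt by lra; reflexivity);
  clearbody r1 r2 c s iw;
  assert (Hp : p = r1*r1-1) by lra; rewrite ?Hp;
  assert (Hs : s^2 = 1 - c^2) by nra; assert (Hr : r2^2 = 2 - r1^2) by nra;
  clear H1 H2 H4 Hp; field_simplify_eq; rewrite ?Hs, ?Hr, ?Hw; field.

Lemma eps_epsinv (p th : R) (G1 : sqrt (1+p) * sqrt (1+p) = 1+p) (G2 : sqrt (1-p) * sqrt (1-p) = 1-p) (f : Sp2) :
  epsop p th (epsinv p th f) = f.
Proof.
  destruct f as [f1 f2].
  unfold epsinv, epsop, ssub, sadd, ssc, Lsh, Lsh_adj.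
  apply (pair_ext (_ : Seq2) (_ : Seq2)); intro x; apply Cx_ext; crunch_core; alg_finish th p G1 G2.
Qed.

Lemma epsinv_eps (p th : R) (G1 : sqrt (1+p) * sqrt (1+p) = 1+p) (G2 : sqrt (1-p) * sqrt (1-p) = 1-p) (f : Sp2) :
  epsinv p th (epsop p th f) = f.
Proof.
  destruct f as [f1 f2].
  unfold epsinv, epsop, ssub, sadd, ssc, Lsh, Lsh_adj.
  apply (pair_ext (_ : Seq2) (_ : Seq2)); intro x; apply Cx_ext; crunch_core; alg_finish th p G1 G2.
Qed.

Lemma Gam_eps (p : R) (q : Cx) (th : R) (G : good p q th) (f : Sp2) :
  Gam p q (epsop p th f) = epsop p th (Jop f).
Proof.
  destruct G as (H1 & H2 & H3 & Hq1 & Hq2).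
  destruct f as [f1 f2].
  unfold Jop, epsop, Gam, ssub, sadd, ssc, Lsh, Lsh_adj.
  apply (pair_ext (_ : Seq2) (_ : Seq2)); intro x; apply Cx_ext; simpl; rewrite ?Hq1, ?Hq2, ?H3; crunch_core;
  clear Hq1 Hq2 H3; alg_finish th p H1 H2.
Qed.

Lemma eps_Qop (p : R) (q : Cx) (th : R) a1 a2 b (G : good p q th) (f : Sp2) :
  Qop p q a1 a2 b (epsop p th f) = epsop p th (Qblock p q th a1 a2 b f).
Proof.
  destruct G as (H1 & H2 & H3 & Hq1 & Hq2).
  destruct f as [f1 f2].
  unfold Qop, epsop, Qblock, Qeps_m, Qeps_p, Qeps, Gam, Coin, vsub, ssub, sadd, ssc, smul, Lsh, Lsh_adj, Cinv, Cnorm2.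
  apply (pair_ext (_ : Seq2) (_ : Seq2)); intro x; apply Cx_ext; simpl; rewrite ?Hq1, ?Hq2, ?H3; crunch_core;
  clear Hq1 Hq2 H3; alg_finish th p H1 H2.
Qed.

Lemma psumZ_ext (u v : Z -> R) N : (forall x, u x = v x) -> psumZ u N = psumZ v N.
Proof. intro H; induction N; simpl; rewrite ?IHN; rewrite ?H; auto. Qed.

Lemma psumZ_plus (u v : Z -> R) N : psumZ (fun x => u x + v x) N = psumZ u N + psumZ v N.
Proof. induction N; simpl; [ring|rewrite IHN; ring]. Qed.

Lemma psumZ_scal (u : Z -> R) c N : psumZ (fun x => c * u x) N = c * psumZ u N.
Proof. induction N; simpl; [ring|rewrite IHN; ring]. Qed.

Lemma psumZ_le (u v : Z -> R) N : (forall x, u x <= v x) -> psumZ u N <= psumZ v N.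
Proof. intro H; induction N; cbn [psumZ]. apply H. pose proof (H (Z.of_nat (S N))); pose proof (H (- Z.of_nat (S N))%Z); pose proof (H (Z.of_nat (S N))); lra. Qed.

Lemma psumZ_nonneg (u : Z -> R) N : (forall x, 0 <= u x) -> 0 <= psumZ u N.
Proof. intro H; induction N; cbn [psumZ]. apply H. pose proof (H (Z.of_nat (S N))); pose proof (H (- Z.of_nat (S N))%Z); lra. Qed.

Lemma psumZ_growing (u : Z -> R) : (forall x, 0 <= u x) -> Un_growing (psumZ u).
Proof. intros H n; cbn [psumZ]. pose proof (H (Z.of_nat (S n))); pose proof (H (- Z.of_nat (S n))%Z); lra. Qed.

Lemma psumZ_mono (u : Z -> R) N M : (forall x, 0 <= u x) -> (N <= M)%nat -> psumZ u N <= psumZ u M.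
Proof.
  intros H HNM; induction HNM; [lra|]. pose proof (psumZ_growing u H m); lra.
Qed.

Lemma psumZ_shift (u : Z -> R) N :
  psumZ (fun x => u (x + 1)%Z) N + u (- Z.of_nat N)%Z = psumZ u N + u (Z.of_nat N + 1)%Z.
Proof.
  induction N; cbn [psumZ].
  - simpl. ring.
  - rewrite Nat2Z.inj_succ. unfold Z.succ.
    replace (- (Z.of_nat N + 1) + 1)%Z with (- Z.of_nat N)%Z by lia. lra.
Qed.

Lemma cv_const (c : R) : Un_cv (fun _ => c) c.
Proof. intros eps He; exists O; intros; unfold Rdist; rewrite Rminus_diag, Rabs_R0; lra. Qed.

Definition summ (u : Z -> R) : Prop := exists B, forall N, psumZ (fun x => Rabs (u x)) N <= B.

Definition Ssum (u : Z -> R) : R :=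
  match excluded_middle_informative (exists l, Un_cv (psumZ u) l) with
  | left H => proj1_sig (constructive_indefinite_description _ H)
  | right _ => 0
  end.

Lemma Ssum_eq (u : Z -> R) l : Un_cv (psumZ u) l -> Ssum u = l.
Proof.
  intro H. unfold Ssum. destruct excluded_middle_informative as [H'|H'].
  - destruct constructive_indefinite_description as [l' Hl']; simpl. eapply UL_sequence; eauto.
  - exfalso; apply H'; eauto.
Qed.

Lemma cv_nonneg (u : Z -> R) B : (forall x, 0 <= u x) -> (forall N, psumZ u N <= B) ->
  exists l, Un_cv (psumZ u) l.
Proof.
  intros H HB. destruct (growing_cv (psumZ u)) as [l Hl].
  - apply psumZ_growing; auto.
  - exists B; intros r [i ->]; apply HB.
  - eauto.
Qed.

Lemma summ_cv (u : Z -> R) : summ u -> exists l, Un_cv (psumZ u) l.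
Proof.
  intros [B HB].
  set (P := fun x => (Rabs (u x) + u x) / 2). set (M := fun x => (Rabs (u x) - u x) / 2).
  assert (HP : forall x, 0 <= P x) by (intro x; unfold P; pose proof (Rle_abs (u x)); pose proof (Rabs_pos (u x)); pose proof (Rabs_Ropp (u x)); pose proof (Rle_abs (- u x)); lra).
  assert (HM : forall x, 0 <= M x) by (intro x; unfold M; pose proof (Rle_abs (u x)); pose proof (Rabs_Ropp (u x)); pose proof (Rle_abs (- u x)); lra).
  destruct (cv_nonneg P B HP) as [lP HlP].
  { intro N. eapply Rle_trans; [|apply (HB N)]. apply psumZ_le. intro x; unfold P.
    pose proof (HM x); unfold M in *; lra. }
  destruct (cv_nonneg M B HM) as [lM HlM].
  { intro N. eapply Rle_trans; [|apply (HB N)]. apply psumZ_le. intro x; unfold M.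
    pose proof (HP x); unfold P in *; lra. }
  exists (lP - lM). intros eps Heps. destruct (CV_minus _ _ _ _ HlP HlM eps Heps) as [K HK].
  exists K; intros n Hn. specialize (HK n Hn).
  replace (psumZ u n) with (psumZ P n - psumZ M n); auto.
  rewrite (psumZ_ext P (fun x => u x + M x)) by (intro x; unfold P, M; lra).
  rewrite psumZ_plus; ring.
Qed.

Lemma Ssum_spec (u : Z -> R) : summ u -> Un_cv (psumZ u) (Ssum u).
Proof. intro H; destruct (summ_cv u H) as [l Hl]; rewrite (Ssum_eq u l Hl); auto. Qed.

Lemma summ_le (u v : Z -> R) : (forall x, Rabs (u x) <= v x) -> summ v -> summ u.
Proof.
  intros H [B HB]; exists B; intro N. eapply Rle_trans; [|apply (HB N)]. apply psumZ_le.
  intro x. eapply Rle_trans; [apply H|apply Rle_abs].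
Qed.

Lemma summ_nonneg (u : Z -> R) B : (forall x, 0 <= u x) -> (forall N, psumZ u N <= B) -> summ u.
Proof.
  intros H HB; exists B; intro N. rewrite (psumZ_ext _ u); auto. intro x; apply Rabs_right; apply Rle_ge; auto.
Qed.

Lemma summ_abs_bound (u : Z -> R) : summ u -> exists B, forall N, psumZ (fun x => Rabs (u x)) N <= B.
Proof. auto. Qed.

Lemma summ_plus (u v : Z -> R) : summ u -> summ v -> summ (fun x => u x + v x).
Proof.
  intros [A HA] [B HB]; exists (A + B); intro N.
  eapply Rle_trans with (psumZ (fun x => Rabs (u x) + Rabs (v x)) N).
  - apply psumZ_le; intro; apply Rabs_triang.
  - rewrite psumZ_plus. specialize (HA N); specialize (HB N); lra.
Qed.

Lemma summ_scal (u : Z -> R) c : summ u -> summ (fun x => c * u x).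
Proof.
  intros [A HA]; exists (Rabs c * A); intro N.
  rewrite (psumZ_ext _ (fun x => Rabs c * Rabs (u x))) by (intro; apply Rabs_mult).
  rewrite psumZ_scal. apply Rmult_le_compat_l; [apply Rabs_pos|auto].
Qed.

Lemma summ_zero : summ (fun _ => 0).
Proof. exists 0; intro N. rewrite (psumZ_ext _ (fun x => 0 * 0)) by (intro; rewrite Rabs_R0; ring).
  rewrite psumZ_scal; lra. Qed.

Lemma Ssum_plus (u v : Z -> R) : summ u -> summ v -> Ssum (fun x => u x + v x) = Ssum u + Ssum v.
Proof.
  intros Hu Hv. apply Ssum_eq. intros eps Heps.
  destruct (CV_plus _ _ _ _ (Ssum_spec u Hu) (Ssum_spec v Hv) eps Heps) as [K HK].
  exists K; intros n Hn; rewrite psumZ_plus; auto.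
Qed.

Lemma Ssum_scal (u : Z -> R) c : summ u -> Ssum (fun x => c * u x) = c * Ssum u.
Proof.
  intros Hu. apply Ssum_eq. intros eps Heps.
  destruct (CV_mult (fun _ => c) _ c _ (cv_const c) (Ssum_spec u Hu) eps Heps) as [K HK].
  exists K; intros n Hn; rewrite psumZ_scal; auto.
Qed.

Lemma Ssum_ext (u v : Z -> R) : (forall x, u x = v x) -> Ssum u = Ssum v.
Proof. intro H; f_equal; apply functional_extensionality; auto. Qed.

Lemma Ssum_le (u v : Z -> R) : summ u -> summ v -> (forall x, u x <= v x) -> Ssum u <= Ssum v.
Proof.
  intros Hu Hv H. apply (@Rle_cv_lim (psumZ u) (psumZ v) (Ssum u) (Ssum v)); auto using Ssum_spec.
  intro; apply psumZ_le; auto.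
Qed.

Lemma Ssum_zero : Ssum (fun _ => 0) = 0.
Proof.
  apply Ssum_eq. intros eps Heps; exists O; intros n _.
  rewrite (psumZ_ext _ (fun x => 0 * 0)) by (intro; ring). rewrite psumZ_scal. unfold Rdist.
  rewrite Rmult_0_l, Rminus_0_r, Rabs_R0; lra.
Qed.

Lemma Ssum_nonneg (u : Z -> R) : summ u -> (forall x, 0 <= u x) -> 0 <= Ssum u.
Proof. intros Hu H. rewrite <- Ssum_zero. apply Ssum_le; auto using summ_zero. Qed.

Lemma psum_le_Ssum (u : Z -> R) N : summ u -> (forall x, 0 <= u x) -> psumZ u N <= Ssum u.
Proof. intros Hu H. apply growing_ineq; auto using psumZ_growing, Ssum_spec. Qed.

Lemma Ssum_le_bound (u : Z -> R) r : summ u -> (forall N, psumZ u N <= r) -> Ssum u <= r.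
Proof.
  intros Hu H. apply (@Rle_cv_lim (psumZ u) (fun _ => r) (Ssum u) r); auto using Ssum_spec. apply cv_const.
Qed.

Lemma pt_le_psum (u : Z -> R) x : (forall x, 0 <= u x) -> u x <= psumZ u (Z.abs_nat x).
Proof.
  intro H. destruct (Z.abs_nat x) eqn:E.
  - assert (x = 0%Z) by lia. subst; cbn [psumZ]; lra.
  - cbn [psumZ]. pose proof (psumZ_nonneg u n H).
    pose proof (H (Z.of_nat (S n))). pose proof (H (- Z.of_nat (S n))%Z).
    destruct (Z.le_ge_cases 0 x).
    + assert (Ex : x = Z.of_nat (S n)) by lia. rewrite Ex. lra.
    + assert (Ex : x = (- Z.of_nat (S n))%Z) by lia. rewrite Ex. lra.
Qed.

Lemma Ssum_zero_pt (u : Z -> R) : summ u -> (forall x, 0 <= u x) -> Ssum u = 0 -> forall x, u x = 0.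
Proof.
  intros Hu H H0 x. apply Rle_antisym; [|apply H].
  pose proof (pt_le_psum u x H). pose proof (psum_le_Ssum u (Z.abs_nat x) Hu H). lra.
Qed.

Lemma summ_shift1 (u : Z -> R) : summ u -> summ (fun x => u (x + 1)%Z).
Proof.
  intros [B HB]; exists B; intro N. eapply Rle_trans; [|apply (HB (S N))].
  pose proof (psumZ_shift (fun x => Rabs (u x)) N). cbn [psumZ].
  pose proof (Rabs_pos (u (- Z.of_nat N)%Z)). pose proof (Rabs_pos (u (- Z.of_nat (S N))%Z)).
  rewrite Nat2Z.inj_succ in *. unfold Z.succ in *. lra.
Qed.

Lemma summ_shiftm1 (u : Z -> R) : summ u -> summ (fun x => u (x - 1)%Z).
Proof.
  intros [B HB]; exists B; intro N. eapply Rle_trans; [|apply (HB (S N))].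
  pose proof (psumZ_shift (fun x => Rabs (u (x - 1)%Z)) N) as E. cbn [psumZ].
  rewrite (psumZ_ext (fun x => Rabs (u (x + 1 - 1)%Z)) (fun x => Rabs (u x))) in E
    by (intro; rewrite Z.add_simpl_r; auto).
  assert (E1 : (- Z.of_nat N - 1 = - Z.of_nat (S N))%Z) by lia. rewrite E1 in E.
  pose proof (Rabs_pos (u (Z.of_nat N + 1 - 1)%Z)). pose proof (Rabs_pos (u (Z.of_nat (S N)))).
  lra.
Qed.

Lemma cv_S_inv (a : nat -> R) l : Un_cv (fun N => a (S N)) l -> Un_cv a l.
Proof.
  intros H eps Heps. destruct (H eps Heps) as [K HK]. exists (S K); intros n Hn.
  destruct n; [lia|]. apply HK; lia.
Qed.

Lemma cv_S (a : nat -> R) l : Un_cv a l -> Un_cv (fun N => a (S N)) l.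
Proof. intros H eps Heps. destruct (H eps Heps) as [K HK]. exists K; intros n Hn; apply HK; lia. Qed.

Lemma tails0 (u : Z -> R) : summ u ->
  Un_cv (fun N => u (Z.of_nat (S N))) 0 /\ Un_cv (fun N => u (- Z.of_nat (S N))%Z) 0.
Proof.
  intro Hu. destruct Hu as [B HB].
  destruct (cv_nonneg (fun x => Rabs (u x)) B) as [l Hl]; auto using Rabs_pos.
  assert (D : Un_cv (fun N => psumZ (fun x => Rabs (u x)) (S N) - psumZ (fun x => Rabs (u x)) N) 0).
  { intros eps Heps. destruct (CV_minus _ _ _ _ (cv_S _ _ Hl) Hl eps Heps) as [K HK].
    exists K; intros n Hn; specialize (HK n Hn). replace 0 with (l - l) by ring. auto. }
  split; intros eps Heps; destruct (D eps Heps) as [K HK]; exists K; intros n Hn; specialize (HK n Hn);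
    unfold Rdist in *; simpl in *; rewrite Rminus_0_r in *;
    pose proof (Rabs_pos (u (Z.of_nat (S n)))); pose proof (Rabs_pos (u (- Z.of_nat (S n))%Z));
    simpl in *; rewrite Rabs_right in HK by lra; lra.
Qed.

Lemma Ssum_shift1 (u : Z -> R) : summ u -> Ssum (fun x => u (x + 1)%Z) = Ssum u.
Proof.
  intro Hu. apply Ssum_eq. apply cv_S_inv.
  destruct (tails0 u Hu) as [T1 T2].
  assert (E : forall N, psumZ (fun x => u (x + 1)%Z) (S N) =
     psumZ u (S N) + u (Z.of_nat (S (S N))) - u (- Z.of_nat (S N))%Z).
  { intro N. pose proof (psumZ_shift u (S N)). replace (Z.of_nat (S (S N))) with (Z.of_nat (S N) + 1)%Z by lia. lra. }
  intros eps Heps.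
  destruct (CV_minus _ _ _ _ (CV_plus _ _ _ _ (cv_S _ _ (Ssum_spec u Hu)) (cv_S _ _ T1)) T2 eps Heps) as [K HK].
  exists K; intros n Hn; specialize (HK n Hn). rewrite E. replace (Ssum u) with (Ssum u + 0 - 0) by ring. auto.
Qed.

Lemma Ssum_shiftm1 (u : Z -> R) : summ u -> Ssum (fun x => u (x - 1)%Z) = Ssum u.
Proof.
  intro Hu. rewrite <- (Ssum_shift1 (fun x => u (x - 1)%Z)) by (apply summ_shiftm1; auto).
  apply Ssum_ext; intro; rewrite Z.add_simpl_r; auto.
Qed.

Record lp {V W : NSpace} (f : V -> W) (g : W -> V) : Prop := {
  lp_add : forall x y, f (vadd x y) = vadd (f x) (f y);
  lp_sc : forall c x, f (vsc c x) = vsc c (f x);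
  lp_zero : f vzero = vzero;
  lpi_add : forall x y, g (vadd x y) = vadd (g x) (g y);
  lpi_sc : forall c x, g (vsc c x) = vsc c (g x);
  lpi_zero : g vzero = vzero;
  lp_left : forall x, g (f x) = x
}.

Record iso {V W : NSpace} (A : V -> Prop) (B : W -> Prop) (f : V -> W) (g : W -> V) : Prop := {
  i_lp : lp f g;
  i_right : forall y, B y -> f (g y) = y;
  i_map : forall x, A x -> B (f x);
  i_mapi : forall y, B y -> A (g y);
  i_norm : forall x r, sumsq_le x r -> sumsq_le (f x) r;
  i_normi : forall y r, sumsq_le y r -> sumsq_le (g y) r
}.

Lemma lincomb_map {V W : NSpace} (f : V -> W)
  (Hadd : forall x y, f (vadd x y) = vadd (f x) (f y)) (Hsc : forall c x, f (vsc c x) = vsc c (f x))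
  (H0 : f vzero = vzero) cs vs : f (lincomb cs vs) = lincomb cs (map f vs).
Proof.
  revert vs; induction cs as [|c cs IH]; intros [|v vs]; simpl; auto.
  rewrite Hadd, Hsc, IH; auto.
Qed.

Lemma lp_lincomb {V W : NSpace} (f : V -> W) g (L : lp f g) cs vs : f (lincomb cs vs) = lincomb cs (map f vs).
Proof. apply lincomb_map; apply L. Qed.
Lemma lpi_lincomb {V W : NSpace} (f : V -> W) g (L : lp f g) cs vs : g (lincomb cs vs) = lincomb cs (map g vs).
Proof. apply lincomb_map; apply L. Qed.

Lemma vsub_map {V W : NSpace} (f : V -> W)
  (Hadd : forall x y, f (vadd x y) = vadd (f x) (f y)) (Hsc : forall c x, f (vsc c x) = vsc c (f x)) x y :
  f (vsub x y) = vsub (f x) (f y).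
Proof. unfold vsub; rewrite Hadd, Hsc; auto. Qed.

Lemma Forall_map_iff {A B : Type} (f : A -> B) (P : B -> Prop) l : Forall P (map f l) <-> Forall (fun x => P (f x)) l.
Proof. induction l; simpl; split; intro H; inversion H; subst; constructor; try apply IHl; auto. Qed.

Lemma map_id_in {A : Type} (f : A -> A) (P : A -> Prop) l : (forall x, P x -> f x = x) -> Forall P l -> map f l = l.
Proof. intros H HF; induction HF; simpl; auto. rewrite H, IHHF; auto. Qed.

Lemma dim_transfer {V W : NSpace} (P : V -> Prop) (P' : W -> Prop) (f : V -> W) (g : W -> V)
  (I : lp f g)
  (H1 : forall x, P x -> P' (f x)) (H2 : forall y, P' y -> P (g y) /\ f (g y) = y) n :
  dim_is P n <-> dim_is P' n.
Proof.
  split.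
  - intros (vs & Hl & HF & Hi & Hs). exists (map f vs). repeat split.
    + rewrite length_map; auto.
    + apply Forall_map_iff. eapply Forall_impl; [|exact HF]. auto.
    + intros cs Hcs Hz. rewrite length_map in Hcs. apply Hi; auto.
      rewrite <- (lp_lincomb f g I) in Hz.
      rewrite <- (lp_left _ _ I (lincomb cs vs)), Hz. apply (lpi_zero _ _ I).
    + intros y Hy. destruct (H2 y Hy) as [Hgy Efy]. destruct (Hs _ Hgy) as (cs & Hcs & E).
      exists cs; split; auto. rewrite <- Efy, E. apply (lp_lincomb f g I).
  - intros (vs & Hl & HF & Hi & Hs). exists (map g vs). repeat split.
    + rewrite length_map; auto.
    + apply Forall_map_iff. eapply Forall_impl; [|exact HF]. intros a Ha; apply H2; auto.
    + intros cs Hcs Hz. rewrite length_map in Hcs. apply Hi; auto.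
      apply (f_equal f) in Hz. rewrite (lp_lincomb f g I) in Hz.
      rewrite map_map, (map_id_in _ P') in Hz; auto. rewrite Hz; apply I.
      intros; apply H2; auto.
    + intros x Hx. destruct (Hs _ (H1 x Hx)) as (cs & Hcs & E).
      exists cs; split; auto. rewrite <- (lp_left _ _ I x), E. apply (lpi_lincomb f g I).
Qed.

Lemma tr_range {V' W' V W : NSpace} (dom' : V' -> Prop) (cod' : W' -> Prop) (dom : V -> Prop) (cod : W -> Prop)
  (T' : V' -> W') (T : V -> W) f fi g gi (If : iso dom' dom f fi) (Ig : iso cod' cod g gi)
  (HT : forall x, T (f x) = g (T' x)) :
  (forall w, range dom' T' w -> range dom T (g w)) /\
  (forall y, range dom T y -> range dom' T' (gi y) /\ g (gi y) = y).
Proof.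
  split.
  - intros w [x [Hx ->]]. exists (f x); split; [apply If; auto|auto].
  - intros y [z [Hz ->]]. rewrite <- (i_right _ _ _ _ If z Hz), HT, (lp_left _ _ (i_lp _ _ _ _ Ig)).
    split; auto. exists (fi z); split; auto. apply If; auto.
Qed.

Lemma tr_fredholm {V' W' V W : NSpace} (dom' : V' -> Prop) (cod' : W' -> Prop) (dom : V -> Prop) (cod : W -> Prop)
  (T' : V' -> W') (T : V -> W) f fi g gi (If : iso dom' dom f fi) (Ig : iso cod' cod g gi)
  (HT : forall x, T (f x) = g (T' x)) (Hcl : Defs.closed_set cod) :
  Fredholm dom' cod' T' <-> Fredholm dom cod T.
Proof.
  destruct (tr_range dom' cod' dom cod T' T f fi g gi If Ig HT) as [R1 R2].
  pose proof (i_lp _ _ _ _ If) as Lf. pose proof (i_lp _ _ _ _ Ig) as Lg.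
  assert (Tinv : forall y, dom y -> T y = g (T' (fi y))).
  { intros y Hy. rewrite <- (i_right _ _ _ _ If y Hy) at 1. auto. }
  assert (ginj : forall a b, g a = g b -> a = b).
  { intros a b E. rewrite <- (lp_left _ _ Lg a), E. apply Lg. }
  assert (Rng : forall w, range dom T (g w) -> range dom' T' w).
  { intros w H. destruct (R2 _ H) as [H' _]. rewrite (lp_left _ _ Lg) in H'. auto. }
  assert (KER : forall n, dim_is (kernel dom' T') n <-> dim_is (kernel dom T) n).
  { intro n. apply (dim_transfer _ _ f fi Lf).
    - intros x [Hx Ex]. split; [apply If; auto|]. rewrite HT, Ex. apply Lg.
    - intros y [Hy Ey]. split; [split|].
      + apply If; auto.
      + apply ginj. rewrite <- Tinv, Ey; auto. symmetry; apply Lg.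
      + apply If; auto. }
  assert (COD : forall c, codim_is (range dom' T') cod' c <-> codim_is (range dom T) cod c).
  { intro c; split.
    - intros (vs & Hl & HF & Hi & Hs). exists (map g vs). repeat split.
      + rewrite length_map; auto.
      + apply Forall_map_iff. eapply Forall_impl; [|exact HF]. apply Ig.
      + intros cs Hcs Hr. apply Hi; auto. apply Rng. rewrite (lp_lincomb g gi Lg); auto.
      + intros y Hy. destruct (Hs (gi y)) as (cs & r & Hcs & Hr & E); [apply Ig; auto|].
        exists cs, (g r). repeat split; auto.
        rewrite <- (i_right _ _ _ _ Ig y Hy), E, (lp_add _ _ Lg), (lp_lincomb g gi Lg); auto.
    - intros (vs & Hl & HF & Hi & Hs). exists (map gi vs). repeat split.
      + rewrite length_map; auto.
      + apply Forall_map_iff. eapply Forall_impl; [|exact HF]. apply Ig.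
      + intros cs Hcs Hr. apply Hi; auto. apply R1 in Hr.
        rewrite (lp_lincomb g gi Lg), map_map, (map_id_in _ cod) in Hr; auto. apply Ig.
      + intros w Hw. destruct (Hs (g w)) as (cs & r & Hcs & Hr & E); [apply Ig; auto|].
        exists cs, (gi r). repeat split; auto.
        * apply R2; auto.
        * rewrite <- (lp_left _ _ Lg w), E, (lpi_add _ _ Lg), (lpi_lincomb g gi Lg); auto. }
  assert (MAPS : (forall x, dom' x -> cod' (T' x)) <-> (forall y, dom y -> cod (T y))).
  { split.
    - intros H y Hy. rewrite Tinv; auto. apply Ig. apply H. apply If; auto.
    - intros H x Hx. rewrite <- (lp_left _ _ Lg (T' x)). apply Ig. rewrite <- HT. apply H. apply If; auto. }
  assert (BND : bounded_on dom' T' <-> bounded_on dom T).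
  { split; intros [M HM]; exists M.
    - intros y r Hy Hr. rewrite Tinv; auto. apply Ig. apply HM; [apply If; auto|]. apply If; auto.
    - intros x r Hx Hr. rewrite <- (lp_left _ _ Lg (T' x)). apply Ig. rewrite <- HT. apply HM.
      + apply If; auto.
      + apply If; auto. }
  unfold Fredholm. split.
  - intros (Hm & Hb & [n Hn] & Hc & [c Hcd]). repeat split.
    + apply MAPS; auto.
    + apply BND; auto.
    + exists n; apply KER; auto.
    + intros gs y Hgs Hy Hconv.
      assert (Hcy : cod y).
      { apply (Hcl gs y); auto. intro k. destruct (Hgs k) as [z [Hz ->]]. apply MAPS; auto. }
      rewrite <- (i_right _ _ _ _ Ig y Hcy). apply R1.
      apply (Hc (fun k => gi (gs k))).
      * intro k. apply R2; auto.
      * destruct Hy as [r Hr]. exists r. apply Ig; auto.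
      * intros eps He. destruct (Hconv eps He) as [K HK]. exists K. intros k Hk.
        rewrite <- (vsub_map gi (lpi_add _ _ Lg) (lpi_sc _ _ Lg)). apply Ig; auto.
    + exists c; apply COD; auto.
  - intros (Hm & Hb & [n Hn] & Hc & [c Hcd]). repeat split.
    + apply MAPS; auto.
    + apply BND; auto.
    + exists n; apply KER; auto.
    + intros gs y Hgs Hy Hconv. apply Rng.
      apply (Hc (fun k => g (gs k))).
      * intro k. apply R1; auto.
      * destruct Hy as [r Hr]. exists r. apply Ig; auto.
      * intros eps He. destruct (Hconv eps He) as [K HK]. exists K. intros k Hk.
        rewrite <- (vsub_map g (lp_add _ _ Lg) (lp_sc _ _ Lg)). apply Ig; auto.
    + exists c; apply COD; auto.
Qed.

Lemma tr_kernel {V' W' V W : NSpace} (dom' : V' -> Prop) (dom : V -> Prop)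
  (T' : V' -> W') (T : V -> W) f fi g gi (If : iso dom' dom f fi) (Lg : lp g gi)
  (HT : forall x, T (f x) = g (T' x)) n :
  dim_is (kernel dom' T') n <-> dim_is (kernel dom T) n.
Proof.
  pose proof (i_lp _ _ _ _ If) as Lf.
  assert (Tinv : forall y, dom y -> T y = g (T' (fi y))).
  { intros y Hy. rewrite <- (i_right _ _ _ _ If y Hy) at 1. auto. }
  assert (ginj : forall a b, g a = g b -> a = b).
  { intros a b E. rewrite <- (lp_left _ _ Lg a), E. apply Lg. }
  apply (dim_transfer _ _ f fi Lf).
  - intros x [Hx Ex]. split; [apply If; auto|]. rewrite HT, Ex. apply Lg.
  - intros y [Hy Ey]. split; [split|].
    + apply If; auto.
    + apply ginj. rewrite <- Tinv, Ey; auto. symmetry; apply Lg.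
    + apply If; auto.
Qed.

Lemma tr_codim {V' W' V W : NSpace} (dom' : V' -> Prop) (cod' : W' -> Prop) (dom : V -> Prop) (cod : W -> Prop)
  (T' : V' -> W') (T : V -> W) f fi g gi (If : iso dom' dom f fi) (Ig : iso cod' cod g gi)
  (HT : forall x, T (f x) = g (T' x)) c :
  codim_is (range dom' T') cod' c <-> codim_is (range dom T) cod c.
Proof.
  destruct (tr_range dom' cod' dom cod T' T f fi g gi If Ig HT) as [R1 R2].
  pose proof (i_lp _ _ _ _ Ig) as Lg.
  assert (Rng : forall w, range dom T (g w) -> range dom' T' w).
  { intros w H. destruct (R2 _ H) as [H' _]. rewrite (lp_left _ _ Lg) in H'. auto. }
  split.
    - intros (vs & Hl & HF & Hi & Hs). exists (map g vs). repeat split.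
      + rewrite length_map; auto.
      + apply Forall_map_iff. eapply Forall_impl; [|exact HF]. apply Ig.
      + intros cs Hcs Hr. apply Hi; auto. apply Rng. rewrite (lp_lincomb g gi Lg); auto.
      + intros y Hy. destruct (Hs (gi y)) as (cs & r & Hcs & Hr & E); [apply Ig; auto|].
        exists cs, (g r). repeat split; auto.
        rewrite <- (i_right _ _ _ _ Ig y Hy), E, (lp_add _ _ Lg), (lp_lincomb g gi Lg); auto.
    - intros (vs & Hl & HF & Hi & Hs). exists (map gi vs). repeat split.
      + rewrite length_map; auto.
      + apply Forall_map_iff. eapply Forall_impl; [|exact HF]. apply Ig.
      + intros cs Hcs Hr. apply Hi; auto. apply R1 in Hr.
        rewrite (lp_lincomb g gi Lg), map_map, (map_id_in _ cod) in Hr; auto. apply Ig.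
      + intros w Hw. destruct (Hs (g w)) as (cs & r & Hcs & Hr & E); [apply Ig; auto|].
        exists cs, (gi r). repeat split; auto.
        * apply R2; auto.
        * rewrite <- (lp_left _ _ Lg w), E, (lpi_add _ _ Lg), (lpi_lincomb g gi Lg); auto.
Qed.

Definition n2 (f : Seq) : Z -> R := fun x => Cnorm2 (f x).
Definition ip (f g : Seq) : Z -> Cx := fun x => Cmul (f x) (Cconj (g x)).

Lemma Cnorm2_nonneg z : 0 <= Cnorm2 z.
Proof. unfold Cnorm2; nra. Qed.

Lemma Cnorm2_zero z : Cnorm2 z = 0 -> z = C0.
Proof. unfold Cnorm2; intro H; apply Cx_ext; simpl; nra. Qed.

Lemma Cnorm2_add z w : Cnorm2 (Cadd z w) <= 2 * Cnorm2 z + 2 * Cnorm2 w.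
Proof. unfold Cnorm2; simpl. pose proof (pow2_ge_0 (cre z - cre w)); pose proof (pow2_ge_0 (cim z - cim w)); nra. Qed.

Lemma Cnorm2_mul z w : Cnorm2 (Cmul z w) = Cnorm2 z * Cnorm2 w.
Proof. unfold Cnorm2; simpl; ring. Qed.

Lemma ip_re_bound z w : Rabs (cre (Cmul z (Cconj w))) <= (Cnorm2 z + Cnorm2 w) / 2.
Proof. unfold Cnorm2; simpl. pose proof (pow2_ge_0 (cre z - cre w)); pose proof (pow2_ge_0 (cim z - cim w));
  pose proof (pow2_ge_0 (cre z + cre w)); pose proof (pow2_ge_0 (cim z + cim w)); apply Rabs_le; split; nra. Qed.
Lemma ip_im_bound z w : Rabs (cim (Cmul z (Cconj w))) <= (Cnorm2 z + Cnorm2 w) / 2.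
Proof. unfold Cnorm2; simpl. pose proof (pow2_ge_0 (cim z - cre w)); pose proof (pow2_ge_0 (cre z + cim w));
  pose proof (pow2_ge_0 (cim z + cre w)); pose proof (pow2_ge_0 (cre z - cim w)); apply Rabs_le; split; nra. Qed.

Lemma n2_summ_nonneg (f : Seq) : forall x, 0 <= n2 f x.
Proof. intro; apply Cnorm2_nonneg. Qed.

Lemma summ_ext u v : (forall x, u x = v x) -> summ u -> summ v.
Proof. intro H; replace v with u; auto; apply functional_extensionality; auto. Qed.

Definition csumm (u : Z -> Cx) : Prop := summ (fun x => cre (u x)) /\ summ (fun x => cim (u x)).
Definition CSsum (u : Z -> Cx) : Cx := mkCx (Ssum (fun x => cre (u x))) (Ssum (fun x => cim (u x))).

Lemma csumm_plus u v : csumm u -> csumm v -> csumm (fun x => Cadd (u x) (v x)).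
Proof. intros [A B] [C D]; split; simpl; apply summ_plus; auto. Qed.

Lemma CSsum_plus u v : csumm u -> csumm v -> CSsum (fun x => Cadd (u x) (v x)) = Cadd (CSsum u) (CSsum v).
Proof. intros [A B] [C D]; apply Cx_ext; simpl; apply (Ssum_plus (fun x => cre (u x)) (fun x => cre (v x)))
  || apply (Ssum_plus (fun x => cim (u x)) (fun x => cim (v x))); auto. Qed.

Lemma csumm_scal c u : csumm u -> csumm (fun x => Cmul c (u x)).
Proof.
  intros [A B]; split; simpl.
  - apply (summ_ext (fun x => cre c * cre (u x) + (- cim c) * cim (u x))); [intro; ring|].
    apply summ_plus; apply summ_scal; auto.
  - apply (summ_plus (fun x => cre c * cim (u x)) (fun x => cim c * cre (u x))); apply summ_scal; auto.
Qed.

Lemma CSsum_scal c u : csumm u -> CSsum (fun x => Cmul c (u x)) = Cmul c (CSsum u).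
Proof.
  intros [A B]; apply Cx_ext; simpl.
  - rewrite (Ssum_ext _ (fun x => cre c * cre (u x) + (- cim c) * cim (u x))) by (intro; ring).
    rewrite Ssum_plus, !Ssum_scal; try apply summ_scal; auto. ring.
  - rewrite Ssum_plus, !Ssum_scal; try apply summ_scal; auto.
Qed.

Lemma csumm_shift1 u : csumm u -> csumm (fun x => u (x + 1)%Z).
Proof. intros [A B]; split; apply (summ_shift1 (fun x => cre (u x))) || apply (summ_shift1 (fun x => cim (u x))); auto. Qed.
Lemma csumm_shiftm1 u : csumm u -> csumm (fun x => u (x - 1)%Z).
Proof. intros [A B]; split; apply (summ_shiftm1 (fun x => cre (u x))) || apply (summ_shiftm1 (fun x => cim (u x))); auto. Qed.
Lemma CSsum_shift1 u : csumm u -> CSsum (fun x => u (x + 1)%Z) = CSsum u.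
Proof. intros [A B]; apply Cx_ext; simpl; apply (Ssum_shift1 (fun x => cre (u x))) || apply (Ssum_shift1 (fun x => cim (u x))); auto. Qed.
Lemma CSsum_ext u v : (forall x, u x = v x) -> CSsum u = CSsum v.
Proof. intro H; f_equal; apply functional_extensionality; auto. Qed.
Lemma csumm_ext u v : (forall x, u x = v x) -> csumm u -> csumm v.
Proof. intro H; replace v with u; auto; apply functional_extensionality; auto. Qed.


Lemma summ_n2sum f g : summ (n2 f) -> summ (n2 g) -> summ (fun x => (n2 f x + n2 g x) / 2).
Proof.
  intros Hf Hg. apply (summ_ext (fun x => /2 * (n2 f x + n2 g x))); [intro; field|].
  apply summ_scal, summ_plus; auto.
Qed.

Lemma csumm_ip f g : summ (n2 f) -> summ (n2 g) -> csumm (ip f g).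
Proof.
  intros Hf Hg. pose proof (summ_n2sum f g Hf Hg) as S.
  split; eapply summ_le; try exact S; intro x; unfold ip, n2.
  - apply ip_re_bound.
  - apply ip_im_bound.
Qed.

Lemma CSsum_conj u : csumm u -> CSsum (fun x => Cconj (u x)) = Cconj (CSsum u).
Proof.
  intros [A B]; apply Cx_ext; simpl; auto.
  rewrite (Ssum_ext _ (fun x => (-1) * cim (u x))) by (intro; ring). rewrite Ssum_scal; auto; ring.
Qed.

Lemma csumm_zero : csumm (fun _ => C0).
Proof. split; simpl; apply summ_zero. Qed.
Lemma CSsum_zero : CSsum (fun _ => C0) = C0.
Proof. apply Cx_ext; simpl; apply Ssum_zero. Qed.

Lemma psumZC_re u N : cre (psumZC u N) = psumZ (fun x => cre (u x)) N.
Proof. induction N; simpl; auto. rewrite IHN; auto. Qed.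
Lemma psumZC_im u N : cim (psumZC u N) = psumZ (fun x => cim (u x)) N.
Proof. induction N; simpl; auto. rewrite IHN; auto. Qed.

Definition W2 (f g : Sp2) : Z -> Cx := fun x => Cadd (ip (fst f) (fst g) x) (ip (snd f) (snd g) x).

Lemma inner_iff (f g : Sp2) z : csumm (W2 f g) -> (inner_is f g z <-> z = CSsum (W2 f g)).
Proof.
  intros [A B]. unfold inner_is. split.
  - intros [H1 H2]. apply Cx_ext; simpl.
    + symmetry; apply Ssum_eq. intros e He; destruct (H1 e He) as [K HK]; exists K; intros n Hn.
      specialize (HK n Hn). rewrite psumZC_re in HK. auto.
    + symmetry; apply Ssum_eq. intros e He; destruct (H2 e He) as [K HK]; exists K; intros n Hn.
      specialize (HK n Hn). rewrite psumZC_im in HK. auto.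
  - intros ->. simpl. split.
    + intros e He; destruct (Ssum_spec _ A e He) as [K HK]; exists K; intros n Hn.
      rewrite psumZC_re. apply HK; auto.
    + intros e He; destruct (Ssum_spec _ B e He) as [K HK]; exists K; intros n Hn.
      rewrite psumZC_im. apply HK; auto.
Qed.

Lemma summ_n2_iff (f : Seq) : summ (n2 f) <-> exists B, forall N, psumZ (n2 f) N <= B.
Proof.
  split.
  - intros [B HB]; exists B; intro N. eapply Rle_trans; [|apply (HB N)]. apply psumZ_le; intro; apply Rle_abs.
  - intros [B HB]; apply (summ_nonneg _ B); auto. intro; apply Cnorm2_nonneg.
Qed.

Lemma sumsq1 (f : Sp1) r : sumsq_le f r <-> summ (n2 f) /\ Ssum (n2 f) <= r.
Proof.
  unfold sumsq_le; simpl; unfold pn1. split.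
  - intro H. assert (S : summ (n2 f)) by (apply summ_n2_iff; exists r; auto).
    split; auto. apply Ssum_le_bound; auto.
  - intros [S H] N. eapply Rle_trans; [|exact H]. apply psum_le_Ssum; auto. intro; apply Cnorm2_nonneg.
Qed.

Lemma l2_1 (f : Sp1) : l2 f <-> summ (n2 f).
Proof.
  split.
  - intros [r Hr]. apply sumsq1 in Hr; tauto.
  - intro S. exists (Ssum (n2 f)). apply sumsq1; split; auto; lra.
Qed.

Lemma sumsq2 (f : Sp2) r : sumsq_le f r <->
  summ (n2 (fst f)) /\ summ (n2 (snd f)) /\ Ssum (n2 (fst f)) + Ssum (n2 (snd f)) <= r.
Proof.
  unfold sumsq_le; simpl; unfold pn1. split.
  - intro H.
    assert (S1 : summ (n2 (fst f))).
    { apply summ_n2_iff; exists r; intro N. specialize (H N).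
      pose proof (psumZ_nonneg (n2 (snd f)) N (n2_summ_nonneg _)). unfold n2 in *; lra. }
    assert (S2 : summ (n2 (snd f))).
    { apply summ_n2_iff; exists r; intro N. specialize (H N).
      pose proof (psumZ_nonneg (n2 (fst f)) N (n2_summ_nonneg _)). unfold n2 in *; lra. }
    repeat split; auto. rewrite <- Ssum_plus; auto. apply Ssum_le_bound; [apply summ_plus; auto|].
    intro N; rewrite psumZ_plus; apply H.
  - intros (S1 & S2 & H) N.
    pose proof (psum_le_Ssum (n2 (fst f)) N S1 (n2_summ_nonneg _)).
    pose proof (psum_le_Ssum (n2 (snd f)) N S2 (n2_summ_nonneg _)). unfold n2 in *; lra.
Qed.

Lemma l2_2 (f : Sp2) : l2 f <-> summ (n2 (fst f)) /\ summ (n2 (snd f)).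
Proof.
  split.
  - intros [r Hr]. apply sumsq2 in Hr; tauto.
  - intros [S1 S2]. exists (Ssum (n2 (fst f)) + Ssum (n2 (snd f))). apply sumsq2; repeat split; auto; lra.
Qed.

Lemma Ssum_n2_zero (f : Seq) : summ (n2 f) -> Ssum (n2 f) = 0 -> f = (fun _ => C0).
Proof.
  intros S H. apply functional_extensionality; intro x. apply Cnorm2_zero.
  apply (Ssum_zero_pt (n2 f) S (n2_summ_nonneg f) H x).
Qed.

Lemma re_ip_self (f : Seq) x : cre (ip f f x) = n2 f x.
Proof. unfold ip, n2, Cnorm2; simpl; ring. Qed.

Lemma CSsum_ip_self (f : Seq) : cre (CSsum (ip f f)) = Ssum (n2 f).
Proof. simpl; apply Ssum_ext; intro; apply re_ip_self. Qed.

Lemma eps_pt_norm p th (G1 : sqrt (1+p) * sqrt (1+p) = 1+p) (G2 : sqrt (1-p) * sqrt (1-p) = 1-p) (f : Sp2) x :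
  n2 (fst (epsop p th f)) x + n2 (snd (epsop p th f)) (x + 1)%Z = n2 (fst f) x + n2 (snd f) x.
Proof.
  destruct f as [f1 f2]. unfold n2, Cnorm2, epsop, ssub, sadd, ssc, Lsh_adj. crunch_core. alg_finish th p G1 G2.
Qed.

Lemma epsinv_pt_norm p th (G1 : sqrt (1+p) * sqrt (1+p) = 1+p) (G2 : sqrt (1-p) * sqrt (1-p) = 1-p) (g : Sp2) x :
  n2 (fst (epsinv p th g)) x + n2 (snd (epsinv p th g)) x = n2 (fst g) x + n2 (snd g) (x + 1)%Z.
Proof.
  destruct g as [g1 g2]. unfold n2, Cnorm2, epsinv, ssub, sadd, ssc, Lsh. crunch_core. alg_finish th p G1 G2.
Qed.

Lemma eps_pt_ip p th (G1 : sqrt (1+p) * sqrt (1+p) = 1+p) (G2 : sqrt (1-p) * sqrt (1-p) = 1-p) (f g : Sp2) x :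
  Cadd (ip (fst (epsop p th f)) (fst (epsop p th g)) x) (ip (snd (epsop p th f)) (snd (epsop p th g)) (x + 1)%Z)
  = W2 f g x.
Proof.
  destruct f as [f1 f2], g as [g1 g2]. unfold W2, ip, epsop, ssub, sadd, ssc, Lsh_adj.
  apply Cx_ext; crunch_core; alg_finish th p G1 G2.
Qed.

Lemma summ_n2_nonneg_le (u : Z -> R) (v : Z -> R) : (forall x, 0 <= u x <= v x) -> summ v -> summ u.
Proof. intros H S. apply (summ_le u v); auto. intro x; destruct (H x); rewrite Rabs_right; lra. Qed.

Lemma eps_norm p th (G1 : sqrt (1+p) * sqrt (1+p) = 1+p) (G2 : sqrt (1-p) * sqrt (1-p) = 1-p) (f : Sp2) :
  summ (n2 (fst f)) -> summ (n2 (snd f)) ->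
  summ (n2 (fst (epsop p th f))) /\ summ (n2 (snd (epsop p th f))) /\
  Ssum (n2 (fst (epsop p th f))) + Ssum (n2 (snd (epsop p th f))) = Ssum (n2 (fst f)) + Ssum (n2 (snd f)).
Proof.
  intros S1 S2. set (e := epsop p th f).
  assert (P := eps_pt_norm p th G1 G2 f).
  assert (T1 : summ (n2 (fst e))).
  { apply (summ_n2_nonneg_le _ (fun x => n2 (fst f) x + n2 (snd f) x)); [|apply summ_plus; auto].
    intro x; specialize (P x). pose proof (n2_summ_nonneg (fst e) x). pose proof (n2_summ_nonneg (snd e) (x+1)%Z).
    unfold e in *; lra. }
  assert (T2s : summ (fun x => n2 (snd e) (x + 1)%Z)).
  { apply (summ_n2_nonneg_le _ (fun x => n2 (fst f) x + n2 (snd f) x)); [|apply summ_plus; auto].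
    intro x; specialize (P x). pose proof (n2_summ_nonneg (fst e) x). pose proof (n2_summ_nonneg (snd e) (x+1)%Z).
    unfold e in *; lra. }
  assert (T2 : summ (n2 (snd e))).
  { apply (summ_ext (fun x => n2 (snd e) (x - 1 + 1)%Z)); [intro; rewrite Z.sub_add; auto|].
    apply (summ_shiftm1 (fun x => n2 (snd e) (x + 1)%Z)); auto. }
  repeat split; auto.
  rewrite <- (Ssum_shift1 (n2 (snd e))) by auto.
  rewrite <- Ssum_plus, <- Ssum_plus by auto. apply Ssum_ext; intro x. apply P.
Qed.

Lemma epsinv_norm p th (G1 : sqrt (1+p) * sqrt (1+p) = 1+p) (G2 : sqrt (1-p) * sqrt (1-p) = 1-p) (g : Sp2) :
  summ (n2 (fst g)) -> summ (n2 (snd g)) ->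
  summ (n2 (fst (epsinv p th g))) /\ summ (n2 (snd (epsinv p th g))) /\
  Ssum (n2 (fst (epsinv p th g))) + Ssum (n2 (snd (epsinv p th g))) = Ssum (n2 (fst g)) + Ssum (n2 (snd g)).
Proof.
  intros S1 S2. set (e := epsinv p th g).
  assert (P := epsinv_pt_norm p th G1 G2 g).
  assert (S2s : summ (fun x => n2 (snd g) (x + 1)%Z)) by (apply (summ_shift1 (n2 (snd g))); auto).
  assert (T1 : summ (n2 (fst e))).
  { apply (summ_n2_nonneg_le _ (fun x => n2 (fst g) x + n2 (snd g) (x+1)%Z)); [|apply summ_plus; auto].
    intro x; specialize (P x). pose proof (n2_summ_nonneg (fst e) x). pose proof (n2_summ_nonneg (snd e) x).
    unfold e in *; lra. }
  assert (T2 : summ (n2 (snd e))).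
  { apply (summ_n2_nonneg_le _ (fun x => n2 (fst g) x + n2 (snd g) (x+1)%Z)); [|apply summ_plus; auto].
    intro x; specialize (P x). pose proof (n2_summ_nonneg (fst e) x). pose proof (n2_summ_nonneg (snd e) x).
    unfold e in *; lra. }
  repeat split; auto.
  rewrite <- (Ssum_shift1 (n2 (snd g))) by auto.
  rewrite <- Ssum_plus, <- Ssum_plus by auto. apply Ssum_ext; intro x. apply P.
Qed.

Lemma eps_sumsq p th (G1 : sqrt (1+p) * sqrt (1+p) = 1+p) (G2 : sqrt (1-p) * sqrt (1-p) = 1-p) (f : Sp2) r :
  sumsq_le f r -> sumsq_le (epsop p th f) r.
Proof.
  intro H. apply sumsq2 in H. destruct H as (S1 & S2 & H).
  destruct (eps_norm p th G1 G2 f S1 S2) as (T1 & T2 & E). apply sumsq2; repeat split; auto. lra.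
Qed.

Lemma epsinv_sumsq p th (G1 : sqrt (1+p) * sqrt (1+p) = 1+p) (G2 : sqrt (1-p) * sqrt (1-p) = 1-p) (f : Sp2) r :
  sumsq_le f r -> sumsq_le (epsinv p th f) r.
Proof.
  intro H. apply sumsq2 in H. destruct H as (S1 & S2 & H).
  destruct (epsinv_norm p th G1 G2 f S1 S2) as (T1 & T2 & E). apply sumsq2; repeat split; auto. lra.
Qed.

Lemma eps_l2 p th (G1 : sqrt (1+p) * sqrt (1+p) = 1+p) (G2 : sqrt (1-p) * sqrt (1-p) = 1-p) (f : Sp2) :
  l2 f -> l2 (epsop p th f).
Proof. intros [r Hr]; exists r; apply eps_sumsq; auto. Qed.
Lemma epsinv_l2 p th (G1 : sqrt (1+p) * sqrt (1+p) = 1+p) (G2 : sqrt (1-p) * sqrt (1-p) = 1-p) (f : Sp2) :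
  l2 f -> l2 (epsinv p th f).
Proof. intros [r Hr]; exists r; apply epsinv_sumsq; auto. Qed.

Lemma csumm_W2 (f g : Sp2) : l2 f -> l2 g -> csumm (W2 f g).
Proof.
  intros Hf Hg. apply l2_2 in Hf; apply l2_2 in Hg. unfold W2.
  apply csumm_plus; apply csumm_ip; tauto.
Qed.

Lemma eps_W2 p th (G1 : sqrt (1+p) * sqrt (1+p) = 1+p) (G2 : sqrt (1-p) * sqrt (1-p) = 1-p) (f g : Sp2) :
  l2 f -> l2 g -> CSsum (W2 (epsop p th f) (epsop p th g)) = CSsum (W2 f g).
Proof.
  intros Hf Hg.
  pose proof (eps_l2 p th G1 G2 f Hf) as Ef. pose proof (eps_l2 p th G1 G2 g Hg) as Eg.
  apply l2_2 in Ef; apply l2_2 in Eg.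
  assert (A : csumm (ip (fst (epsop p th f)) (fst (epsop p th g)))) by (apply csumm_ip; tauto).
  assert (B : csumm (ip (snd (epsop p th f)) (snd (epsop p th g)))) by (apply csumm_ip; tauto).
  unfold W2 at 1. rewrite CSsum_plus by auto.
  rewrite <- (CSsum_shift1 (ip (snd (epsop p th f)) (snd (epsop p th g)))) by auto.
  rewrite <- CSsum_plus by (auto; apply csumm_shift1; auto).
  apply CSsum_ext; intro x. apply eps_pt_ip; auto.
Qed.

Definition coin_ok (a1 a2 : Z -> R) (b : Z -> Cx) : Prop :=
  forall x, -1 <= a1 x <= 1 /\ -1 <= a2 x <= 1 /\ Cnorm2 (b x) <= 1.

Lemma n2_three K X Y Zz :
  Cnorm2 (Cmul K (Cadd (Cadd X (Cmul (RtoC (-1)) Y)) Zz)) <=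
  Cnorm2 K * (4 * Cnorm2 X + 4 * Cnorm2 Y + 2 * Cnorm2 Zz).
Proof.
  rewrite Cnorm2_mul. apply Rmult_le_compat_l; [apply Cnorm2_nonneg|].
  pose proof (Cnorm2_add (Cadd X (Cmul (RtoC (-1)) Y)) Zz).
  pose proof (Cnorm2_add X (Cmul (RtoC (-1)) Y)).
  rewrite Cnorm2_mul in H0. replace (Cnorm2 (RtoC (-1))) with 1 in H0 by (unfold Cnorm2; simpl; ring). lra.
Qed.

Lemma Cnorm2_RtoC r : Cnorm2 (RtoC r) = r * r.
Proof. unfold Cnorm2; simpl; ring. Qed.
Lemma Cnorm2_expi t : Cnorm2 (Cexpi t) = 1.
Proof. unfold Cnorm2; simpl. pose proof (sin2_cos2 t); unfold Rsqr in *; lra. Qed.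
Lemma Cnorm2_conj z : Cnorm2 (Cconj z) = Cnorm2 z.
Proof. unfold Cnorm2; simpl; ring. Qed.

Lemma prod3_bound a n F A : 0 <= a <= A -> 0 <= n <= 1 -> 0 <= F -> a * (n * F) <= A * F.
Proof. intros. assert (n * F <= F) by nra. nra. Qed.

Lemma Qeps_pt_bound sg p q th a1 a2 b (Hsg : sg * sg = 1) (Hp : -1 <= p <= 1) (Hq : Cmod q <= 1)
  (Hc : coin_ok a1 a2 b) (f : Seq) x :
  n2 (Qeps sg p q th a1 a2 b f) x <= 4 * (n2 f (x + 1)%Z + n2 f (x - 1)%Z + n2 f x).
Proof.
  unfold n2, Qeps, ssc, sadd, ssub, smul, Lsh, Lsh_adj.
  eapply Rle_trans; [apply n2_three|].
  rewrite !Cnorm2_mul, !Cnorm2_RtoC, !Cnorm2_expi, !Cnorm2_conj.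
  assert (HK : Cnorm2 (Cinv (Cmul (RtoC (-2)) Ci)) = /4) by (unfold Cinv, Cmul, RtoC, Ci; simpl; unfold Cnorm2; simpl; field). rewrite HK.
  destruct (Hc x) as (A1 & A2' & B0). destruct (Hc (x+1)%Z) as (A1' & A2 & B1).
  pose proof (Cnorm2_nonneg (f (x+1)%Z)). pose proof (Cnorm2_nonneg (f (x-1)%Z)). pose proof (Cnorm2_nonneg (f x)).
  pose proof (Cnorm2_nonneg (b x)). pose proof (Cnorm2_nonneg (b (x+1)%Z)).
  assert (Hsp : -1 <= sg * p <= 1) by (split; nra).
  assert (Q0 : 0 <= Cmod q) by (unfold Cmod; apply sqrt_pos).
  assert (E1 : (1 + sg * p) * (1 + sg * p) * 1 * (Cnorm2 (b (x+1)%Z) * Cnorm2 (f (x+1)%Z)) <= 4 * Cnorm2 (f (x+1)%Z)).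
  { rewrite Rmult_1_r. apply prod3_bound; nra. }
  assert (E2 : (1 - sg * p) * (1 - sg * p) * 1 * (Cnorm2 (b x) * Cnorm2 (f (x-1)%Z)) <= 4 * Cnorm2 (f (x-1)%Z)).
  { rewrite Rmult_1_r. apply prod3_bound; nra. }
  assert (E3 : sg * Cmod q * (sg * Cmod q) * ((a2 (x+1)%Z - a1 x) * (a2 (x+1)%Z - a1 x) * Cnorm2 (f x)) <= 4 * Cnorm2 (f x)).
  { assert (EE : sg * Cmod q * (sg * Cmod q) = Cmod q * Cmod q) by
      (transitivity (sg*sg*(Cmod q*Cmod q)); [ring| rewrite Hsg; ring]).
    rewrite EE. set (d := a2 (x+1)%Z - a1 x). assert (-2 <= d <= 2) by (unfold d; lra).
    assert (0 <= d * d <= 4) by nra. set (F := Cnorm2 (f x)) in *.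
    assert (d * d * F <= 4 * F) by nra. assert (0 <= Cmod q * Cmod q <= 1) by nra.
    assert (0 <= d * d * F) by nra. nra. }
  lra.
Qed.

Lemma Qeps_l2 sg p q th a1 a2 b (Hsg : sg * sg = 1) (Hp : -1 <= p <= 1) (Hq : Cmod q <= 1)
  (Hc : coin_ok a1 a2 b) (f : Seq) : summ (n2 f) -> summ (n2 (Qeps sg p q th a1 a2 b f)).
Proof.
  intro S. apply (summ_n2_nonneg_le _ (fun x => 4 * (n2 f (x + 1)%Z + n2 f (x - 1)%Z + n2 f x))).
  - intro x; split; [apply n2_summ_nonneg|apply Qeps_pt_bound; auto].
  - apply summ_scal. apply summ_plus; [apply summ_plus|]; auto.
    + apply (summ_shift1 (n2 f)); auto.
    + apply (summ_shiftm1 (n2 f)); auto.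
Qed.

Lemma Qeps_lin sg p q th a1 a2 b c (f g : Seq) :
  Qeps sg p q th a1 a2 b (sadd (ssc c f) g) = sadd (ssc c (Qeps sg p q th a1 a2 b f)) (Qeps sg p q th a1 a2 b g).
Proof.
  apply functional_extensionality; intro x. unfold Qeps, ssc, sadd, ssub, smul, Lsh, Lsh_adj.
  apply Cx_ext; simpl; ring.
Qed.

Lemma Qeps_zero sg p q th a1 a2 b : Qeps sg p q th a1 a2 b szero = szero.
Proof.
  apply functional_extensionality; intro x. unfold Qeps, ssc, sadd, ssub, smul, Lsh, Lsh_adj, szero, C0.
  apply Cx_ext; simpl; ring.
Qed.

Definition U1 (b : Z -> Cx) (g h : Seq) (y : Z) : Cx := Cmul (Cmul (b y) (g y)) (Cconj (h (y - 1)%Z)).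
Definition U2 (b : Z -> Cx) (g h : Seq) (y : Z) : Cx := Cmul (Cmul (Cconj (b y)) (g (y - 1)%Z)) (Cconj (h y)).
Definition U3 (a1 a2 : Z -> R) (g h : Seq) (y : Z) : Cx :=
  Cmul (Cmul (RtoC (a2 (y + 1)%Z - a1 y)) (g y)) (Cconj (h y)).
Definition Kc : Cx := Cinv (Cmul (RtoC (-2)) Ci).

Lemma adj_left p q th a1 a2 b (g h : Seq) x :
  ip (Qeps_p p q th a1 a2 b g) h x =
  Cadd (Cadd (Cmul (Cmul Kc (Cmul (RtoC (1 + p)) (Cexpi th))) (U1 b g h (x + 1)%Z))
             (Cmul (Cmul Kc (Cmul (RtoC (-1)) (Cmul (RtoC (1 - p)) (Cexpi (- th))))) (U2 b g h x)))
       (Cmul (Cmul Kc (RtoC (Cmod q))) (U3 a1 a2 g h x)).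
Proof.
  unfold ip, Qeps_p, Qeps, U1, U2, U3, Kc, ssc, sadd, ssub, smul, Lsh, Lsh_adj.
  rewrite Z.add_simpl_r. apply Cx_ext; simpl; ring.
Qed.

Lemma adj_right p q th a1 a2 b (g h : Seq) x :
  ip g (Qeps_m p q th a1 a2 b h) x =
  Cadd (Cadd (Cmul (Cmul Kc (Cmul (RtoC (1 + p)) (Cexpi th))) (U1 b g h x))
             (Cmul (Cmul Kc (Cmul (RtoC (-1)) (Cmul (RtoC (1 - p)) (Cexpi (- th))))) (U2 b g h (x + 1)%Z)))
       (Cmul (Cmul Kc (RtoC (Cmod q))) (U3 a1 a2 g h x)).
Proof.
  unfold ip, Qeps_m, Qeps, U1, U2, U3, Kc, ssc, sadd, ssub, smul, Lsh, Lsh_adj.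
  rewrite Z.add_simpl_r.
  apply Cx_ext; simpl; rewrite ?cos_neg, ?sin_neg;
  replace (Cnorm2 (Cmul (RtoC (-2)) Ci)) with 4 by (unfold Cnorm2; simpl; ring); field.
Qed.

Lemma csumm_triple (zf gf wf : Z -> Cx) M : (forall y, Cnorm2 (zf y) <= M) ->
  summ (fun y => Cnorm2 (gf y)) -> summ (fun y => Cnorm2 (wf y)) ->
  csumm (fun y => Cmul (Cmul (zf y) (gf y)) (Cconj (wf y))).
Proof.
  intros HM Sg Sw.
  assert (S : summ (fun y => (Rabs M * Cnorm2 (gf y) + Cnorm2 (wf y)) / 2)).
  { apply (summ_ext (fun y => /2 * (Rabs M * Cnorm2 (gf y) + Cnorm2 (wf y)))); [intro; field|].
    apply summ_scal, summ_plus; [apply summ_scal|]; auto. }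
  assert (B : forall y, (Cnorm2 (Cmul (zf y) (gf y)) + Cnorm2 (wf y)) / 2 <= (Rabs M * Cnorm2 (gf y) + Cnorm2 (wf y)) / 2).
  { intro y. rewrite Cnorm2_mul. pose proof (HM y). pose proof (Cnorm2_nonneg (gf y)). pose proof (Cnorm2_nonneg (zf y)).
    pose proof (Rle_abs M). assert (Cnorm2 (zf y) * Cnorm2 (gf y) <= Rabs M * Cnorm2 (gf y)) by nra. lra. }
  split; eapply summ_le; try exact S; intro y.
  - eapply Rle_trans; [apply ip_re_bound|apply B].
  - eapply Rle_trans; [apply ip_im_bound|apply B].
Qed.

Lemma adjoint p q th a1 a2 b (Hc : coin_ok a1 a2 b) (g h : Seq) : summ (n2 g) -> summ (n2 h) ->
  CSsum (ip (Qeps_p p q th a1 a2 b g) h) = CSsum (ip g (Qeps_m p q th a1 a2 b h)).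
Proof.
  intros Sg Sh.
  assert (C1 : csumm (U1 b g h)).
  { apply (csumm_triple b g (fun y => h (y - 1)%Z) 1); auto.
    - intro y; apply (Hc y).
    - apply (summ_shiftm1 (n2 h)); auto. }
  assert (C2 : csumm (U2 b g h)).
  { apply (csumm_triple (fun y => Cconj (b y)) (fun y => g (y - 1)%Z) h 1); auto.
    - intro y; rewrite Cnorm2_conj; apply (Hc y).
    - apply (summ_shiftm1 (n2 g)); auto. }
  assert (C3 : csumm (U3 a1 a2 g h)).
  { apply (csumm_triple (fun y => RtoC (a2 (y + 1)%Z - a1 y)) g h 4); auto.
    intro y; rewrite Cnorm2_RtoC. destruct (Hc y) as (A & _ & _). destruct (Hc (y+1)%Z) as (_ & A' & _). nra. }
  rewrite (CSsum_ext _ _ (adj_left p q th a1 a2 b g h)), (CSsum_ext _ _ (adj_right p q th a1 a2 b g h)).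
  pose proof (csumm_shift1 _ C1) as C1s. pose proof (csumm_shift1 _ C2) as C2s.
  rewrite !CSsum_plus; try (apply csumm_plus); try (apply csumm_scal); auto.
  rewrite !CSsum_scal; auto. rewrite !CSsum_shift1; auto.
Qed.

Record opT (T : Seq -> Seq) : Prop := {
  oT_l2 : forall f, summ (n2 f) -> summ (n2 (T f));
  oT_lin : forall c f g, T (sadd (ssc c f) g) = sadd (ssc c (T f)) (T g);
  oT_zero : T szero = szero }.

Definition Mset (T : Seq -> Seq) (m : Seq) : Prop := exists f, summ (n2 f) /\ m = T f.

Lemma seq_eq (f g : Seq) : (forall x, f x = g x) -> f = g.
Proof. apply functional_extensionality. Qed.

Lemma summ_n2_comb (c : Cx) (f g : Seq) : summ (n2 f) -> summ (n2 g) -> summ (n2 (sadd (ssc c f) g)).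
Proof.
  intros Sf Sg. apply (summ_n2_nonneg_le _ (fun x => 2 * Cnorm2 c * n2 f x + 2 * n2 g x)).
  - intro x; split; [apply n2_summ_nonneg|]. unfold n2, sadd, ssc.
    pose proof (Cnorm2_add (Cmul c (f x)) (g x)). rewrite Cnorm2_mul in H. lra.
  - apply summ_plus; apply summ_scal; auto.
Qed.

Lemma summ_n2_zero : summ (n2 szero).
Proof. apply (summ_ext (fun _ => 0)); [intro; unfold n2, szero, C0, Cnorm2; simpl; ring|apply summ_zero]. Qed.

Lemma Mset_comb T (O : opT T) c u v : Mset T u -> Mset T v -> Mset T (sadd (ssc c u) v).
Proof.
  intros [f [Sf ->]] [g [Sg ->]]. exists (sadd (ssc c f) g); split.
  - apply summ_n2_comb; auto.
  - symmetry; apply O.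
Qed.

Lemma Mset_zero T (O : opT T) : Mset T szero.
Proof. exists szero; split; [apply summ_n2_zero|symmetry; apply O]. Qed.

Lemma Mset_l2 T (O : opT T) m : Mset T m -> summ (n2 m).
Proof. intros [f [Sf ->]]; apply O; auto. Qed.

Lemma sadd_szero (f : Seq) : sadd f szero = f.
Proof. apply seq_eq; intro; unfold sadd, szero, C0; apply Cx_ext; simpl; ring. Qed.

Lemma Mset_sc T (O : opT T) c u : Mset T u -> Mset T (ssc c u).
Proof. intro H. rewrite <- (sadd_szero (ssc c u)). apply Mset_comb; auto. apply Mset_zero; auto. Qed.

Lemma ssc_one (f : Seq) : ssc (RtoC 1) f = f.
Proof. apply seq_eq; intro; unfold ssc; apply Cx_ext; simpl; ring. Qed.

Lemma Mset_add T (O : opT T) u v : Mset T u -> Mset T v -> Mset T (sadd u v).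
Proof. intros. rewrite <- (ssc_one u). apply Mset_comb; auto. Qed.

Lemma ip_lin1 c (u v w : Seq) x : ip (sadd (ssc c u) v) w x = Cadd (Cmul c (ip u w x)) (ip v w x).
Proof. unfold ip, sadd, ssc; apply Cx_ext; simpl; ring. Qed.

Lemma CSsum_ip_lin c (u v w : Seq) : summ (n2 u) -> summ (n2 v) -> summ (n2 w) ->
  CSsum (ip (sadd (ssc c u) v) w) = Cadd (Cmul c (CSsum (ip u w))) (CSsum (ip v w)).
Proof.
  intros Su Sv Sw. rewrite (CSsum_ext _ _ (ip_lin1 c u v w)).
  rewrite CSsum_plus, CSsum_scal; auto using csumm_ip, csumm_scal.
Qed.

Lemma n2_parallelogram (v m1 m2 : Seq) x :
  n2 (ssub m2 m1) x + 4 * n2 (ssub v (ssc (RtoC (/2)) (sadd m1 m2))) x =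
  2 * n2 (ssub v m1) x + 2 * n2 (ssub v m2) x.
Proof. unfold n2, ssub, sadd, ssc, Cnorm2; simpl; field. Qed.

Lemma n2_expand (v u m : Seq) (s : Cx) x :
  n2 (ssub v (sadd u (ssc s m))) x =
  n2 (ssub v u) x - 2 * cre (Cmul (Cconj s) (ip (ssub v u) m x)) + Cnorm2 s * n2 m x.
Proof. unfold n2, ssub, sadd, ssc, ip, Cnorm2; simpl; ring. Qed.

Lemma sq_split a b t : 0 < t -> (a + b) * (a + b) <= (1 + t) * (a * a) + (1 + / t) * (b * b).
Proof.
  intro Ht.
  assert (0 <= (t * a - b) * (t * a - b) * / t).
  { apply Rmult_le_pos; [apply Rle_0_sqr|left; apply Rinv_0_lt_compat; auto]. }
  replace ((t * a - b) * (t * a - b) * / t) with (t * a * a - 2 * a * b + / t * b * b) in H by (field; lra).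
  replace ((1 + / t) * (b * b)) with (b * b + / t * b * b) by ring. nra.
Qed.

Lemma Cnorm2_split A B t : 0 < t -> Cnorm2 (Cadd A B) <= (1 + t) * Cnorm2 A + (1 + / t) * Cnorm2 B.
Proof.
  intro Ht. unfold Cnorm2; simpl. pose proof (sq_split (cre A) (cre B) t Ht). pose proof (sq_split (cim A) (cim B) t Ht). lra.
Qed.

Lemma n2_split (v u m : Seq) t x : 0 < t ->
  n2 (ssub v u) x <= (1 + t) * n2 (ssub v m) x + (1 + / t) * n2 (ssub m u) x.
Proof.
  intro Ht. unfold n2.
  replace (ssub v u x) with (Cadd (ssub v m x) (ssub m u x)) by (unfold ssub, sadd, ssc; apply Cx_ext; simpl; ring).
  apply Cnorm2_split; auto.
Qed.

Lemma summ_n2_sub (f g : Seq) : summ (n2 f) -> summ (n2 g) -> summ (n2 (ssub f g)).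
Proof.
  intros Sf Sg. apply (summ_n2_nonneg_le _ (fun x => 2 * n2 f x + 2 * n2 g x)).
  - intro x; split; [apply n2_summ_nonneg|]. unfold n2, ssub, sadd, ssc.
    pose proof (Cnorm2_add (f x) (Cmul (RtoC (-1)) (g x))). rewrite Cnorm2_mul, Cnorm2_RtoC in H. lra.
  - apply summ_plus; apply summ_scal; auto.
Qed.

Lemma pt_le_Ssum (u : Z -> R) x : summ u -> (forall x, 0 <= u x) -> u x <= Ssum u.
Proof. intros S H. eapply Rle_trans; [apply (pt_le_psum u x H)|apply psum_le_Ssum; auto]. Qed.

Lemma Mset_range T m : Mset T m <-> @range Sp1 Sp1 (@l2 Sp1) T m.
Proof.
  split; intros [f [Hf E]]; exists f; split; auto; apply l2_1; auto.
Qed.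

Lemma inf_exists T (O : opT T) v : summ (n2 v) ->
  exists d, 0 <= d /\ (forall m, Mset T m -> d <= Ssum (n2 (ssub v m))) /\
    (forall del, del > 0 -> exists m, Mset T m /\ Ssum (n2 (ssub v m)) < d + del).
Proof.
  intro Sv.
  set (E := fun y => exists m, Mset T m /\ y = - Ssum (n2 (ssub v m))).
  assert (Hnd : forall m, Mset T m -> 0 <= Ssum (n2 (ssub v m))).
  { intros m Hm. apply Ssum_nonneg; [apply summ_n2_sub; auto; apply (Mset_l2 T O); auto|apply n2_summ_nonneg]. }
  assert (Hb : bound E). { exists 0. intros y [m [Hm ->]]. specialize (Hnd m Hm); lra. }
  assert (He : exists y, E y). { exists (- Ssum (n2 (ssub v szero))). exists szero; split; auto. apply Mset_zero; auto. }
  destruct (completeness E Hb He) as [L [HL1 HL2]].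
  exists (- L). split; [|split].
  - assert (L <= 0). { apply HL2. intros y [m [Hm ->]]. specialize (Hnd m Hm); lra. } lra.
  - intros m Hm. assert (- Ssum (n2 (ssub v m)) <= L) by (apply HL1; exists m; auto). lra.
  - intros del Hdel. destruct (excluded_middle_informative (exists m, Mset T m /\ Ssum (n2 (ssub v m)) < - L + del)) as [Hx|Hx]; auto.
    exfalso. assert (L <= L - del); [|lra].
    apply HL2. intros y [m [Hm ->]].
    destruct (Rlt_le_dec (Ssum (n2 (ssub v m))) (- L + del)) as [Hl|Hl]; [exfalso; apply Hx; exists m; auto|lra].
Qed.

Lemma cv_inv_succ : Un_cv (fun j => / (INR j + 1)) 0.
Proof.
  intros eps He. destruct (INR_archimed eps 1 He) as [N HN]. exists N. intros n Hn.
  unfold Rdist. rewrite Rminus_0_r. pose proof (pos_INR n).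
  assert (INR N <= INR n) by (apply le_INR; lia).
  rewrite Rabs_right by (apply Rle_ge; left; apply Rinv_0_lt_compat; lra).
  apply (Rmult_lt_reg_r (INR n + 1)); [lra|]. rewrite Rinv_l by lra. nra.
Qed.

Lemma psumZ_cv (F : nat -> Z -> R) (G : Z -> R) : (forall x, Un_cv (fun j => F j x) (G x)) ->
  forall N, Un_cv (fun j => psumZ (F j) N) (psumZ G N).
Proof.
  intros H N; induction N; cbn [psumZ]; auto.
  apply CV_plus; [apply CV_plus|]; auto.
Qed.

Lemma Cnorm2_ssub (a b : Seq) x :
  n2 (ssub a b) x = (cre (a x) - cre (b x)) * (cre (a x) - cre (b x)) + (cim (a x) - cim (b x)) * (cim (a x) - cim (b x)).
Proof. unfold n2, ssub, sadd, ssc, Cnorm2; simpl; ring. Qed.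

Lemma cv_minus_const (a : nat -> R) c l : Un_cv a l -> Un_cv (fun j => c - a j) (c - l).
Proof. intro H. apply CV_minus; auto. apply cv_const. Qed.

Lemma sq_lt_abs a eps : 0 < eps -> a * a < eps * eps -> Rabs a < eps.
Proof. intros He H. destruct (Rcase_abs a); [rewrite Rabs_left|rewrite Rabs_right]; nra. Qed.

Lemma inv_succ_le (n N : nat) : (N <= n)%nat -> / (INR n + 1) <= / (INR N + 1).
Proof.
  intro H. apply Rinv_le_contravar; [pose proof (pos_INR N); lra|]. apply le_INR in H; lra.
Qed.

Lemma inv_succ_pos (n : nat) : 0 < / (INR n + 1).
Proof. apply Rinv_0_lt_compat; pose proof (pos_INR n); lra. Qed.

Lemma cauchy_from_bound (r : nat -> R) : (forall j k, (r j - r k) * (r j - r k) <= 2 * / (INR k + 1) + 2 * / (INR j + 1)) ->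
  Cauchy_crit r.
Proof.
  intros H eps He. destruct (INR_archimed (eps * eps) 4) as [N HN]; [nra|].
  exists N. intros n m Hn Hm. unfold Rdist. apply sq_lt_abs; auto.
  eapply Rle_lt_trans; [apply H|].
  pose proof (inv_succ_le n N Hn). pose proof (inv_succ_le m N Hm). pose proof (pos_INR N).
  assert (4 * / (INR N + 1) < eps * eps).
  { apply (Rmult_lt_reg_r (INR N + 1)); [lra|]. rewrite Rmult_assoc, Rinv_l by lra. nra. }
  lra.
Qed.

Lemma final_arith d N del : 0 <= d -> 1 <= N -> N * del > d + 6 ->
  (1 + / N) * (d + / (N * N + 1)) + (1 + / / N) * (2 * / (N * N + 1)) < d + del.
Proof.
  intros Hd HN Hdel. rewrite Rinv_inv.
  set (iN := / N). assert (HiN : N * iN = 1) by (unfold iN; field; lra).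
  assert (0 < iN <= 1). { unfold iN; split; [apply Rinv_0_lt_compat; lra|]. rewrite <- Rinv_1. apply Rinv_le_contravar; lra. }
  set (e := / (N * N + 1)).
  assert (0 < e) by (unfold e; apply Rinv_0_lt_compat; nra).
  assert (He : e * (N * N + 1) = 1) by (unfold e; field; nra).
  assert (e <= iN * iN).
  { assert (e * (N * N) <= 1) by nra. assert (iN * iN * (N * N) = 1) by (transitivity ((N * iN) * (N * iN)); [ring|rewrite HiN; ring]).
    nra. }
  assert (N * e <= iN) by nra.
  assert (del > (d + 6) * iN).
  { assert (HH : N * del * iN > (d + 6) * iN) by nra. replace (N * del * iN) with (del * (N * iN)) in HH by ring. rewrite HiN in HH. lra. }
  assert (iN * iN <= iN) by nra. assert (iN * e <= iN) by nra.
  nra.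
Qed.

Lemma projection T (O : opT T) (Hcl : Defs.closed_set (@range Sp1 Sp1 (@l2 Sp1) T)) v :
  summ (n2 v) -> exists u, Mset T u /\ forall m, Mset T m -> CSsum (ip (ssub v u) m) = C0.
Proof.
  intro Sv. destruct (inf_exists T O v Sv) as (d & Hd0 & F1 & F2).
  set (nd := fun m => Ssum (n2 (ssub v m))) in *.
  set (ms := fun k => proj1_sig (constructive_indefinite_description _ (F2 _ (inv_succ_pos k)))).
  assert (Hms : forall k, Mset T (ms k) /\ nd (ms k) < d + / (INR k + 1)).
  { intro k; unfold ms; destruct constructive_indefinite_description; auto. }
  assert (Sms : forall k, summ (n2 (ms k))) by (intro k; apply (Mset_l2 T O), Hms).
  assert (HC : forall j k, Ssum (n2 (ssub (ms j) (ms k))) <= 2 * / (INR k + 1) + 2 * / (INR j + 1)).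
  { intros j k. set (m1 := ms k). set (m2 := ms j). set (mid := ssc (RtoC (/2)) (sadd m1 m2)).
    assert (Mm : Mset T mid) by (apply (Mset_sc T O), (Mset_add T O); apply Hms).
    assert (S1 : summ (n2 (ssub v m1))) by (apply summ_n2_sub; [auto|apply Sms]).
    assert (S2 : summ (n2 (ssub v m2))) by (apply summ_n2_sub; [auto|apply Sms]).
    assert (S3 : summ (n2 (ssub v mid))) by (apply summ_n2_sub; auto; apply (Mset_l2 T O); auto).
    assert (S4 : summ (n2 (ssub m2 m1))) by (apply summ_n2_sub; apply Sms).
    pose proof (Ssum_ext _ _ (n2_parallelogram v m1 m2)) as E.
    rewrite Ssum_plus, Ssum_scal, Ssum_plus, Ssum_scal, Ssum_scal in E; try apply summ_scal; auto.
    pose proof (F1 mid Mm). destruct (Hms k) as [_ Hk]. destruct (Hms j) as [_ Hj]. unfold nd in *. fold m1 in Hk. fold m2 in Hj.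
    fold mid in E. lra. }
  assert (Cre : forall x, Cauchy_crit (fun k => cre (ms k x))).
  { intro x. apply cauchy_from_bound. intros j k. eapply Rle_trans; [|apply (HC j k)].
    eapply Rle_trans; [|apply pt_le_Ssum with (x := x)].
    - rewrite Cnorm2_ssub. pose proof (Rle_0_sqr (cim (ms j x) - cim (ms k x))). unfold Rsqr in *; lra.
    - apply summ_n2_sub; auto.
    - apply n2_summ_nonneg. }
  assert (Cim : forall x, Cauchy_crit (fun k => cim (ms k x))).
  { intro x. apply cauchy_from_bound. intros j k. eapply Rle_trans; [|apply (HC j k)].
    eapply Rle_trans; [|apply pt_le_Ssum with (x := x)].
    - rewrite Cnorm2_ssub. pose proof (Rle_0_sqr (cre (ms j x) - cre (ms k x))). unfold Rsqr in *; lra.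
    - apply summ_n2_sub; auto.
    - apply n2_summ_nonneg. }
  set (u := fun x => mkCx (proj1_sig (R_complete _ (Cre x))) (proj1_sig (R_complete _ (Cim x)))).
  assert (Ure : forall x, Un_cv (fun k => cre (ms k x)) (cre (u x))).
  { intro x; unfold u; simpl. destruct (R_complete _ (Cre x)); auto. }
  assert (Uim : forall x, Un_cv (fun k => cim (ms k x)) (cim (u x))).
  { intro x; unfold u; simpl. destruct (R_complete _ (Cim x)); auto. }
  assert (Hk : forall k N, psumZ (n2 (ssub (ms k) u)) N <= 2 * / (INR k + 1)).
  { intros k N.
    assert (CV1 : Un_cv (fun j => psumZ (n2 (ssub (ms k) (ms j))) N) (psumZ (n2 (ssub (ms k) u)) N)).
    { apply psumZ_cv. intro x.
      assert (E1 : (fun j => n2 (ssub (ms k) (ms j)) x) = (fun j =>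
         (cre (ms k x) - cre (ms j x)) * (cre (ms k x) - cre (ms j x)) + (cim (ms k x) - cim (ms j x)) * (cim (ms k x) - cim (ms j x)))).
      { apply functional_extensionality; intro j; apply Cnorm2_ssub. }
      rewrite E1, Cnorm2_ssub.
      apply CV_plus; apply CV_mult; apply cv_minus_const; auto. }
    assert (CV2 : Un_cv (fun j => 2 * / (INR k + 1) + 2 * / (INR j + 1)) (2 * / (INR k + 1) + 2 * 0)).
    { apply CV_plus; [apply cv_const|]. apply CV_mult; [apply cv_const|apply cv_inv_succ]. }
    assert (L : psumZ (n2 (ssub (ms k) u)) N <= 2 * / (INR k + 1) + 2 * 0).
    { apply (Rle_cv_lim (Un := fun j => psumZ (n2 (ssub (ms k) (ms j))) N) (Vn := fun j => 2 * / (INR k + 1) + 2 * / (INR j + 1))); auto.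
      intro j. eapply Rle_trans; [apply psum_le_Ssum; [apply summ_n2_sub; auto|apply n2_summ_nonneg]|].
      pose proof (HC k j). lra. }
    lra. }
  assert (Sk : forall k, summ (n2 (ssub (ms k) u)) /\ Ssum (n2 (ssub (ms k) u)) <= 2 * / (INR k + 1)).
  { intro k. assert (S : summ (n2 (ssub (ms k) u))) by (apply summ_n2_iff; exists (2 * / (INR k + 1)); auto).
    split; auto. apply Ssum_le_bound; auto. }
  assert (Su : summ (n2 u)).
  { apply (summ_n2_nonneg_le _ (fun x => 2 * n2 (ms 0%nat) x + 2 * n2 (ssub (ms 0%nat) u) x)).
    - intro x; split; [apply n2_summ_nonneg|]. unfold n2.
      replace (u x) with (Cadd (ms 0%nat x) (Cmul (RtoC (-1)) (ssub (ms 0%nat) u x))) by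
        (unfold ssub, sadd, ssc; apply Cx_ext; simpl; ring).
      pose proof (Cnorm2_add (ms 0%nat x) (Cmul (RtoC (-1)) (ssub (ms 0%nat) u x))). rewrite Cnorm2_mul, Cnorm2_RtoC in H. lra.
    - apply summ_plus; apply summ_scal; auto. apply Sk. }
  assert (Mu : Mset T u).
  { apply Mset_range. apply (Hcl ms u).
    - intro k. apply Mset_range. apply Hms.
    - apply l2_1; auto.
    - intros eps He. destruct (INR_archimed eps 2 He) as [K HK]. exists K. intros k Hkk.
      apply sumsq1. destruct (Sk k) as [S1 S2]. split; auto. eapply Rle_trans; [exact S2|].
      pose proof (inv_succ_le k K Hkk). pose proof (pos_INR K).
      assert (2 * / (INR K + 1) <= eps).
      { apply (Rmult_le_reg_r (INR K + 1)); [lra|]. rewrite Rmult_assoc, Rinv_l by lra. nra. }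
      lra. }
  assert (Hnu : nd u <= d).
  { apply Rnot_lt_le; intro Hlt. set (del := nd u - d).
    assert (Hdel : del > 0) by (unfold del; lra).
    destruct (INR_archimed del (d + 6) Hdel) as [n Hn].
    set (N := INR (S n)). assert (HN1 : 1 <= N) by (unfold N; rewrite S_INR; pose proof (pos_INR n); lra).
    assert (HNd : N * del > d + 6) by (unfold N; rewrite S_INR; nra).
    set (k := (S n * S n)%nat). assert (Ek : INR k = N * N) by (unfold k, N; rewrite mult_INR; auto).
    assert (Ht : 0 < / N) by (apply Rinv_0_lt_compat; lra).
    assert (B1 : nd u <= (1 + / N) * nd (ms k) + (1 + / / N) * Ssum (n2 (ssub (ms k) u))).
    { unfold nd. rewrite <- !Ssum_scal, <- Ssum_plus; try apply summ_scal; try apply summ_n2_sub; auto; try apply Sk.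
      apply Ssum_le; [apply summ_n2_sub; auto| |intro x; apply n2_split; auto].
      apply summ_plus; apply summ_scal; [apply summ_n2_sub; auto|apply Sk]. }
    destruct (Hms k) as [_ Hk1]. destruct (Sk k) as [_ Hk2]. rewrite Ek in Hk1, Hk2.
    pose proof (final_arith d N del Hd0 HN1 HNd).
    assert (0 < 1 + / N) by lra. assert (0 < 1 + / / N) by (rewrite Rinv_inv; lra).
    assert (nd u < d + del); [|unfold del in *; lra].
    eapply Rle_lt_trans; [exact B1|]. eapply Rle_lt_trans; [|exact H].
    apply Rplus_le_compat; apply Rmult_le_compat_l; lra. }
  exists u; split; auto. intros m Hm.
  set (w := ssub v u). set (a := CSsum (ip w m)). set (Sm := Ssum (n2 m)).
  assert (Smm : summ (n2 m)) by (apply (Mset_l2 T O); auto).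
  assert (Sw : summ (n2 w)) by (apply summ_n2_sub; auto).
  assert (Cwm : csumm (ip w m)) by (apply csumm_ip; auto).
  assert (Key : forall t, 0 < t -> 2 * t * Cnorm2 a <= t * t * Cnorm2 a * Sm).
  { intros t Ht. set (s := Cmul (RtoC t) a).
    assert (Ms : Mset T (sadd u (ssc s m))) by (apply (Mset_add T O); auto; apply (Mset_sc T O); auto).
    pose proof (F1 _ Ms) as Hd. change (d <= nd (sadd u (ssc s m))) in Hd.
    assert (E : nd (sadd u (ssc s m)) = nd u - 2 * (t * Cnorm2 a) + t * t * Cnorm2 a * Sm).
    { unfold nd. rewrite (Ssum_ext _ _ (n2_expand v u m s)).
      destruct (csumm_scal (Cconj s) _ Cwm) as [Cr _].
      rewrite (Ssum_ext _ (fun x => (n2 (ssub v u) x + (-2) * cre (Cmul (Cconj s) (ip (ssub v u) m x))) + Cnorm2 s * n2 m x))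
        by (intro; ring).
      rewrite Ssum_plus; [|apply summ_plus; [exact Sw|apply summ_scal; exact Cr]|apply summ_scal; exact Smm].
      rewrite Ssum_plus; [|exact Sw|apply summ_scal; exact Cr].
      rewrite (Ssum_scal _ (-2)) by exact Cr. rewrite (Ssum_scal (n2 m)) by exact Smm.
      replace (Ssum (fun x => cre (Cmul (Cconj s) (ip (ssub v u) m x)))) with (cre (CSsum (fun x => Cmul (Cconj s) (ip w m x)))) by reflexivity.
      rewrite CSsum_scal by auto. fold a. unfold s, Cnorm2; simpl. fold Sm. unfold w. ring. }
    lra. }
  assert (Hna : Cnorm2 a = 0).
  { pose proof (Cnorm2_nonneg a). assert (0 <= Sm) by (apply Ssum_nonneg; auto; apply n2_summ_nonneg).
    set (t := / (Sm + 1)). assert (Ht : 0 < t) by (apply Rinv_0_lt_compat; lra).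
    assert (t * Sm < 1) by (unfold t; apply (Rmult_lt_reg_r (Sm + 1)); [lra|]; rewrite Rmult_assoc, (Rmult_comm Sm), <- Rmult_assoc, Rinv_l by lra; nra).
    specialize (Key t Ht).
    assert (0 <= t * Cnorm2 a) by nra.
    assert (t * t * Cnorm2 a * Sm = (t * Cnorm2 a) * (t * Sm)) by ring.
    assert ((t * Cnorm2 a) * (t * Sm) <= t * Cnorm2 a) by nra.
    assert (t * Cnorm2 a <= 0) by lra.
    assert (Cnorm2 a <= 0) by nra. lra. }
  apply Cnorm2_zero; auto.
Qed.

Definition adjrel (T S : Seq -> Seq) : Prop :=
  forall g h, summ (n2 g) -> summ (n2 h) -> CSsum (ip (T g) h) = CSsum (ip g (S h)).

Lemma adj_swap T S (OT : opT T) (OS : opT S) (Hadj : adjrel T S) h f : summ (n2 h) -> summ (n2 f) ->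
  CSsum (ip (S h) f) = CSsum (ip h (T f)).
Proof.
  intros Sh Sf.
  rewrite (CSsum_ext (ip (S h) f) (fun x => Cconj (ip f (S h) x))) by (intro; unfold ip; apply Cx_ext; simpl; ring).
  rewrite (CSsum_ext (ip h (T f)) (fun x => Cconj (ip (T f) h x))) by (intro; unfold ip; apply Cx_ext; simpl; ring).
  assert (STf : summ (n2 (T f))) by (apply OT; auto). assert (SSh : summ (n2 (S h))) by (apply OS; auto).
  rewrite !CSsum_conj by (apply csumm_ip; auto). rewrite Hadj; auto.
Qed.

Lemma ip_szero f x : ip szero f x = C0.
Proof. unfold ip, szero, C0; apply Cx_ext; simpl; ring. Qed.

Lemma fun_C0_szero : (fun _ : Z => C0) = szero.
Proof. reflexivity. Qed.

Lemma norm_zero_ip (f : Seq) : summ (n2 f) -> CSsum (ip f f) = C0 -> f = szero.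
Proof.
  intros S H. apply Ssum_n2_zero; auto. rewrite <- CSsum_ip_self, H. reflexivity.
Qed.

Lemma ker_perp T S (OT : opT T) (OS : opT S) (Hadj : adjrel T S) h : summ (n2 h) -> S h = szero ->
  forall m, Mset T m -> CSsum (ip h m) = C0.
Proof.
  intros Sh E m [f [Sf ->]]. rewrite <- (adj_swap T S OT OS Hadj); auto. rewrite E.
  rewrite (CSsum_ext _ _ (ip_szero f)). apply CSsum_zero.
Qed.

Lemma perp_ker T S (OT : opT T) (OS : opT S) (Hadj : adjrel T S) w : summ (n2 w) ->
  (forall m, Mset T m -> CSsum (ip w m) = C0) -> S w = szero.
Proof.
  intros Sw H. apply norm_zero_ip; [apply OS; auto|].
  rewrite (adj_swap T S OT OS Hadj); auto; [|apply OS; auto].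
  apply H. exists (S w); split; auto. apply OS; auto.
Qed.

Lemma ker_adj1 T S (OT : opT T) (OS : opT S) (Hadj : adjrel T S) g : summ (n2 g) -> S (T g) = szero -> T g = szero.
Proof.
  intros Sg E. apply norm_zero_ip; [apply OT; auto|]. rewrite Hadj; auto; [|apply OT; auto].
  rewrite E, (CSsum_ext _ (fun _ => C0)); [apply CSsum_zero|]. intro; unfold ip, szero, C0; apply Cx_ext; simpl; ring.
Qed.

Lemma ker_adj2 T S (OT : opT T) (OS : opT S) (Hadj : adjrel T S) h : summ (n2 h) -> T (S h) = szero -> S h = szero.
Proof.
  intros Sh E. apply norm_zero_ip; [apply OS; auto|]. rewrite (adj_swap T S OT OS Hadj); auto; [|apply OS; auto].
  rewrite E, (CSsum_ext _ (fun _ => C0)); [apply CSsum_zero|]. intro; unfold ip, szero, C0; apply Cx_ext; simpl; ring.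
Qed.

Lemma lincomb_summ (cs : list Cx) (vs : list Seq) : Forall (fun v => summ (n2 v)) vs ->
  summ (n2 (@lincomb Sp1 cs vs)).
Proof.
  revert vs; induction cs as [|c cs IH]; intros [|v vs] HF; simpl; try apply summ_n2_zero.
  inversion HF; subst. apply summ_n2_comb; auto.
Qed.

Lemma lincomb_M T (O : opT T) (cs : list Cx) (us : list Seq) : Forall (Mset T) us -> Mset T (@lincomb Sp1 cs us).
Proof.
  revert us; induction cs as [|c cs IH]; intros [|u us] HF; simpl; try apply (Mset_zero T O).
  inversion HF; subst. apply (Mset_comb T O); auto.
Qed.

Lemma lincomb_perp (cs : list Cx) (ws : list Seq) m : summ (n2 m) ->
  Forall (fun w => summ (n2 w) /\ CSsum (ip w m) = C0) ws -> CSsum (ip (@lincomb Sp1 cs ws) m) = C0.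
Proof.
  intros Sm. revert ws; induction cs as [|c cs IH]; intros [|w ws] HF; simpl;
    try (rewrite (CSsum_ext _ _ (ip_szero m)); apply CSsum_zero).
  inversion HF as [|? ? [Sw Pw] HF']; subst.
  rewrite CSsum_ip_lin; auto.
  - rewrite Pw, IH; auto. apply Cx_ext; simpl; ring.
  - apply lincomb_summ. eapply Forall_impl; [|exact HF']. intros a [Ha _]; exact Ha.
Qed.

Lemma lincomb_combine (cs : list Cx) (vs us : list Seq) : length vs = length us ->
  @lincomb Sp1 cs (map (fun p => ssub (fst p) (snd p)) (combine vs us)) =
  ssub (@lincomb Sp1 cs vs) (@lincomb Sp1 cs us).
Proof.
  revert vs us; induction cs as [|c cs IH]; intros [|v vs] [|u us] Hl; simpl in *; try discriminate;
    try (apply seq_eq; intro; unfold ssub, sadd, ssc, szero, C0; apply Cx_ext; simpl; ring).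
  rewrite IH by lia. apply seq_eq; intro; unfold ssub, sadd, ssc; apply Cx_ext; simpl; ring.
Qed.

Lemma Forall2_combine {A B : Type} (P : A -> B -> Prop) l1 l2 : Forall2 P l1 l2 ->
  Forall (fun p => P (fst p) (snd p)) (combine l1 l2).
Proof. intro H; induction H; simpl; constructor; auto. Qed.

Lemma Forall2_length' {A B : Type} (P : A -> B -> Prop) l1 l2 : Forall2 P l1 l2 -> length l1 = length l2.
Proof. intro H; induction H; simpl; auto. Qed.

Lemma build_proj T (O : opT T) (Hcl : Defs.closed_set (@range Sp1 Sp1 (@l2 Sp1) T)) (vs : list Seq) :
  Forall (fun v => summ (n2 v)) vs ->
  exists us, Forall2 (fun v u => Mset T u /\ forall m, Mset T m -> CSsum (ip (ssub v u) m) = C0) vs us.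
Proof.
  intro HF; induction HF as [|v vs Hv HF IH].
  - exists nil; constructor.
  - destruct IH as [us Hus]. destruct (projection T O Hcl v Hv) as [u Hu]. exists (u :: us); constructor; auto.
Qed.

Lemma CSsum_ip_sub (a b m : Seq) : summ (n2 a) -> summ (n2 b) -> summ (n2 m) ->
  CSsum (ip (ssub a b) m) = Cadd (CSsum (ip a m)) (Cmul (RtoC (-1)) (CSsum (ip b m))).
Proof.
  intros Sa Sb Sm.
  rewrite (CSsum_ext _ (fun x => Cadd (ip a m x) (Cmul (RtoC (-1)) (ip b m x)))) by
    (intro; unfold ip, ssub, sadd, ssc; apply Cx_ext; simpl; ring).
  rewrite CSsum_plus, CSsum_scal; auto using csumm_ip, csumm_scal.
Qed.

Lemma duality T S (OT : opT T) (OS : opT S) (Hadj : adjrel T S)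
  (Hcl : Defs.closed_set (@range Sp1 Sp1 (@l2 Sp1) T)) c
  (Hcod : codim_is (@range Sp1 Sp1 (@l2 Sp1) T) (@l2 Sp1) c) :
  dim_is (@kernel Sp1 Sp1 (@l2 Sp1) S) c.
Proof.
  destruct Hcod as (vs & Hl & HF & Hi & Hs).
  assert (HF' : Forall (fun v => summ (n2 v)) vs) by (eapply Forall_impl; [|exact HF]; intros; apply l2_1; auto).
  destruct (build_proj T OT Hcl vs HF') as [us Hus].
  assert (Hlen : length vs = length us) by (eapply Forall2_length'; eauto).
  assert (HM : Forall (Mset T) us).
  { clear -Hus. induction Hus; constructor; tauto. }
  assert (HSu : Forall (fun u => summ (n2 u)) us) by (eapply Forall_impl; [|exact HM]; intros; apply (Mset_l2 T OT); auto).
  set (ws := map (fun p => ssub (fst p) (snd p)) (combine vs us)).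
  assert (Hws : Forall (fun w => summ (n2 w) /\ forall m, Mset T m -> CSsum (ip w m) = C0) ws).
  { unfold ws. apply Forall_map_iff. pose proof (Forall2_combine _ _ _ Hus) as HC.
    assert (HC2 : Forall (fun p => summ (n2 (fst p)) /\ summ (n2 (snd p))) (combine vs us)).
    { clear -HF' HSu Hlen. revert us Hlen HSu; induction HF'; intros [|u us] Hlen HSu; simpl in *; try constructor; try discriminate.
      - inversion HSu; subst; split; auto.
      - inversion HSu; subst. apply IHHF'; auto. }
    rewrite Forall_forall in *. intros [v u] Hin. specialize (HC _ Hin). specialize (HC2 _ Hin). simpl in *.
    split; [apply summ_n2_sub; tauto|]. apply HC. }
  exists ws. repeat split.
  - unfold ws. rewrite length_map, length_combine, <- Hlen, Nat.min_id; auto.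
  - eapply Forall_impl; [|exact Hws]. intros w [Sw Pw]. split; [apply l2_1; auto|].
    apply (perp_ker T S OT OS Hadj); auto.
  - intros cs Hcs Hz. apply Hi; [unfold ws in Hcs; rewrite length_map, length_combine, <- Hlen, Nat.min_id in Hcs; lia|].
    unfold ws in Hz. rewrite lincomb_combine in Hz by auto.
    assert (E : @lincomb Sp1 cs vs = @lincomb Sp1 cs us).
    { apply seq_eq; intro x. apply (f_equal (fun f => f x)) in Hz. unfold ssub, sadd, ssc in Hz. simpl in Hz.
      unfold szero, C0 in Hz. apply Cx_ext; [apply (f_equal cre) in Hz|apply (f_equal cim) in Hz]; simpl in Hz; lra. }
    rewrite E. apply Mset_range. apply lincomb_M; auto.
  - intros f [Hf Ef]. destruct (Hs f Hf) as (cs & r & Hcs & Hr & E).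
    exists cs; split; [auto|].
    apply l2_1 in Hf. apply Mset_range in Hr.
    set (L := @lincomb Sp1 cs ws).
    assert (SL : summ (n2 L)) by (apply lincomb_summ; eapply Forall_impl; [|exact Hws]; intros a [Ha _]; exact Ha).
    set (dd := ssub f L).
    assert (Edd : dd = sadd r (@lincomb Sp1 cs us)).
    { unfold dd, L, ws. rewrite lincomb_combine by auto. rewrite E.
      apply seq_eq; intro; unfold ssub, sadd, ssc; simpl; apply Cx_ext; simpl; ring. }
    assert (Mdd : Mset T dd) by (rewrite Edd; apply (Mset_add T OT); auto; apply lincomb_M; auto).
    assert (Pdd : forall m, Mset T m -> CSsum (ip dd m) = C0).
    { intros m Hm. assert (Sm : summ (n2 m)) by (apply (Mset_l2 T OT); auto).
      unfold dd. rewrite CSsum_ip_sub; auto.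
      rewrite (ker_perp T S OT OS Hadj f Hf Ef m Hm).
      unfold L. rewrite lincomb_perp; auto.
      - apply Cx_ext; simpl; ring.
      - eapply Forall_impl; [|exact Hws]. intros w [Sw Pw]; split; auto. }
    assert (Z0 : dd = szero).
    { apply norm_zero_ip; [apply (Mset_l2 T OT); auto|]. apply Pdd; auto. }
    apply seq_eq; intro x. apply (f_equal (fun g => g x)) in Z0. unfold dd, ssub, sadd, ssc, szero, C0 in Z0.
    fold L. apply Cx_ext; [apply (f_equal cre) in Z0|apply (f_equal cim) in Z0]; simpl in Z0; lra.
Qed.

Definition Dp (f : Sp2) : Prop := l2 f /\ snd f = szero.
Definition Dm (f : Sp2) : Prop := l2 f /\ fst f = szero.
Definition j1 (g : Sp1) : Sp2 := (g, szero).
Definition j2 (g : Sp1) : Sp2 := (szero, g).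

Lemma sadd_zz : sadd szero szero = szero.
Proof. apply seq_eq; intro; unfold sadd, szero, C0; apply Cx_ext; simpl; ring. Qed.
Lemma ssc_z c : ssc c szero = szero.
Proof. apply seq_eq; intro; unfold ssc, szero, C0; apply Cx_ext; simpl; ring. Qed.

Lemma lp_j1 : lp j1 (fun y : Sp2 => (fst y : Sp1)).
Proof.
  split; simpl; auto; intros; unfold j1; simpl.
  - rewrite sadd_zz; auto.
  - rewrite ssc_z; auto.
Qed.
Lemma lp_j2 : lp j2 (fun y : Sp2 => (snd y : Sp1)).
Proof.
  split; simpl; auto; intros; unfold j2; simpl.
  - rewrite sadd_zz; auto.
  - rewrite ssc_z; auto.
Qed.

Lemma n2_szero_Ssum : summ (n2 szero) /\ Ssum (n2 szero) = 0.
Proof.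
  split; [apply summ_n2_zero|]. rewrite <- Ssum_zero. apply Ssum_ext; intro; unfold n2, szero, C0, Cnorm2; simpl; ring.
Qed.

Lemma iso_j1 : iso (@l2 Sp1) Dp j1 (fun y : Sp2 => (fst y : Sp1)).
Proof.
  destruct n2_szero_Ssum as [Z1 Z2].
  split.
  - apply lp_j1.
  - intros [y1 y2] [_ Hy]; simpl in *; subst; reflexivity.
  - intros x Hx; split; auto. apply l2_2; simpl; split; auto. apply l2_1; auto.
  - intros [y1 y2] [Hy _]; simpl. apply l2_2 in Hy; apply l2_1; tauto.
  - intros x r Hx. apply sumsq1 in Hx. apply sumsq2; simpl. destruct Hx; repeat split; auto; lra.
  - intros [y1 y2] r Hy. apply sumsq2 in Hy. simpl in *. apply sumsq1. destruct Hy as (A & B & C).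
    pose proof (Ssum_nonneg _ B (n2_summ_nonneg y2)). split; auto; lra.
Qed.

Lemma iso_j2 : iso (@l2 Sp1) Dm j2 (fun y : Sp2 => (snd y : Sp1)).
Proof.
  destruct n2_szero_Ssum as [Z1 Z2].
  split.
  - apply lp_j2.
  - intros [y1 y2] [_ Hy]; simpl in *; subst; reflexivity.
  - intros x Hx; split; auto. apply l2_2; simpl; split; auto. apply l2_1; auto.
  - intros [y1 y2] [Hy _]; simpl. apply l2_2 in Hy; apply l2_1; tauto.
  - intros x r Hx. apply sumsq1 in Hx. apply sumsq2; simpl. destruct Hx; repeat split; auto; lra.
  - intros [y1 y2] r Hy. apply sumsq2 in Hy. simpl in *. apply sumsq1. destruct Hy as (A & B & C).
    pose proof (Ssum_nonneg _ A (n2_summ_nonneg y1)). split; auto; lra.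
Qed.

Lemma lp_eps p th (G1 : sqrt (1+p) * sqrt (1+p) = 1+p) (G2 : sqrt (1-p) * sqrt (1-p) = 1-p) :
  lp (epsop p th) (epsinv p th).
Proof.
  split.
  - intros [x1 x2] [y1 y2]. apply (pair_ext (_ : Seq2) (_ : Seq2)); intro z; apply Cx_ext;
      unfold epsop, ssub, sadd, ssc, Lsh_adj; simpl; ring.
  - intros c [x1 x2]. apply (pair_ext (_ : Seq2) (_ : Seq2)); intro z; apply Cx_ext;
      unfold epsop, ssub, sadd, ssc, Lsh_adj; simpl; ring.
  - apply (pair_ext (_ : Seq2) (_ : Seq2)); intro z; apply Cx_ext;
      unfold epsop, ssub, sadd, ssc, Lsh_adj, szero, C0; simpl; ring.
  - intros [x1 x2] [y1 y2]. apply (pair_ext (_ : Seq2) (_ : Seq2)); intro z; apply Cx_ext;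
      unfold epsinv, ssub, sadd, ssc, Lsh; simpl; ring.
  - intros c [x1 x2]. apply (pair_ext (_ : Seq2) (_ : Seq2)); intro z; apply Cx_ext;
      unfold epsinv, ssub, sadd, ssc, Lsh; simpl; ring.
  - apply (pair_ext (_ : Seq2) (_ : Seq2)); intro z; apply Cx_ext;
      unfold epsinv, ssub, sadd, ssc, Lsh, szero, C0; simpl; ring.
  - intro x; apply epsinv_eps; auto.
Qed.

Lemma seq_neg_self (s : Seq) : s = ssc (RtoC (-1)) s -> s = szero.
Proof.
  intro E. apply seq_eq; intro x. apply (f_equal (fun f => f x)) in E. unfold ssc, szero, C0 in *.
  apply Cx_ext; [apply (f_equal cre) in E|apply (f_equal cim) in E]; simpl in *; lra.
Qed.

Lemma epsinv_Gam p q th (G : good p q th) y : epsinv p th (Gam p q y) = Jop (epsinv p th y).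
Proof.
  pose proof G as (G1 & G2 & _).
  rewrite <- (eps_epsinv p th G1 G2 y) at 1. rewrite (Gam_eps p q th G).
  apply epsinv_eps; auto.
Qed.

Lemma iso_eps_p p q th (G : good p q th) : iso Dp (Hplus p q) (epsop p th) (epsinv p th).
Proof.
  pose proof G as (G1 & G2 & _).
  split.
  - apply lp_eps; auto.
  - intros y _; apply eps_epsinv; auto.
  - intros [x1 x2] [Hx Ex]; simpl in Ex; subst. split; [apply eps_l2; auto|].
    rewrite (Gam_eps p q th G). unfold Jop; simpl. rewrite ssc_z; auto.
  - intros y [Hy Ey]. split; [apply epsinv_l2; auto|].
    apply seq_neg_self. pose proof (epsinv_Gam p q th G y) as E. rewrite Ey in E.
    apply (f_equal snd) in E. unfold Jop in E; simpl in E. exact E.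
  - intros; apply eps_sumsq; auto.
  - intros; apply epsinv_sumsq; auto.
Qed.

Lemma iso_eps_m p q th (G : good p q th) : iso Dm (Hminus p q) (epsop p th) (epsinv p th).
Proof.
  pose proof G as (G1 & G2 & _). pose proof (lp_eps p th G1 G2) as L.
  split.
  - apply lp_eps; auto.
  - intros y _; apply eps_epsinv; auto.
  - intros [x1 x2] [Hx Ex]; simpl in Ex; subst. split; [apply eps_l2; auto|].
    rewrite (Gam_eps p q th G), <- (lp_sc _ _ L). f_equal. unfold Jop; simpl. rewrite ssc_z; auto.
  - intros y [Hy Ey]. split; [apply epsinv_l2; auto|].
    apply seq_neg_self. pose proof (epsinv_Gam p q th G y) as E. rewrite Ey, (lpi_sc _ _ L) in E.
    apply (f_equal fst) in E. unfold Jop in E; simpl in E. symmetry; exact E.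
  - intros; apply eps_sumsq; auto.
  - intros; apply epsinv_sumsq; auto.
Qed.

Lemma limit_comp_zero (gs : nat -> Sp2) (g : Sp2) (sel : Sp2 -> Seq)
  (Hsel : sel = fst \/ sel = snd) :
  (forall k, sel (gs k) = szero) -> l2_conv gs g -> sel g = szero.
Proof.
  intros Hz Hc. apply seq_eq; intro x. apply Cnorm2_zero.
  apply Rle_antisym; [|apply Cnorm2_nonneg].
  apply Rnot_lt_le; intro Hlt. assert (He : Cnorm2 (sel g x) / 2 > 0) by lra.
  destruct (Hc _ He) as [K HK]. specialize (HK K (le_n K)).
  apply sumsq2 in HK. destruct HK as (S1 & S2 & HK).
  pose proof (Ssum_nonneg _ S1 (n2_summ_nonneg _)). pose proof (Ssum_nonneg _ S2 (n2_summ_nonneg _)).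
  assert (PT : forall s : Seq, s = szero -> n2 (sadd s (ssc (RtoC (-1)) (sel g))) x = Cnorm2 (sel g x)).
  { intros s ->. unfold n2, sadd, ssc, szero, C0, Cnorm2; simpl; ring. }
  destruct Hsel as [Es|Es]; rewrite Es in *.
  - pose proof (pt_le_Ssum _ x S1 (n2_summ_nonneg _)) as P. simpl in P.
    rewrite (PT _ (Hz K)) in P. simpl in HK, H, H0. lra.
  - pose proof (pt_le_Ssum _ x S2 (n2_summ_nonneg _)) as P. simpl in P.
    rewrite (PT _ (Hz K)) in P. simpl in HK, H, H0. lra.
Qed.

Lemma closed_Dm : Defs.closed_set Dm.
Proof.
  intros gs g Hgs Hg Hc. split; auto. apply (limit_comp_zero gs g fst (or_introl eq_refl)); auto.
  intro k; apply Hgs.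
Qed.

Lemma closed_Dp : Defs.closed_set Dp.
Proof.
  intros gs g Hgs Hg Hc. split; auto. apply (limit_comp_zero gs g snd (or_intror eq_refl)); auto.
  intro k; apply Hgs.
Qed.

Lemma closed_Hminus p q th (G : good p q th) : Defs.closed_set (Hminus p q).
Proof.
  pose proof G as (G1 & G2 & _). pose proof (iso_eps_m p q th G) as I. pose proof (i_lp _ _ _ _ I) as L.
  intros gs g Hgs Hg Hc.
  assert (HAg : Dm (epsinv p th g)).
  { apply (closed_Dm (fun k => epsinv p th (gs k))).
    - intro k; apply I; auto.
    - destruct Hg as [r Hr]; exists r; apply I; auto.
    - intros eps He. destruct (Hc eps He) as [K HK]; exists K; intros k Hk.
      rewrite <- (vsub_map (epsinv p th) (lpi_add _ _ L) (lpi_sc _ _ L)). apply I; auto. }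
  rewrite <- (eps_epsinv p th G1 G2 g). apply I; auto.
Qed.

Lemma Cmod_sq z : Cmod z ^ 2 = Cnorm2 z.
Proof. unfold Cmod. rewrite pow2_sqrt; auto. apply Cnorm2_nonneg. Qed.

Lemma params_good p q theta (Hpq : p ^ 2 + Cmod q ^ 2 = 1) (Htheta : Arg_is q theta) :
  good p q theta /\ -1 <= p <= 1 /\ Cmod q <= 1.
Proof.
  assert (Q0 : 0 <= Cmod q) by (unfold Cmod; apply sqrt_pos).
  assert (Hp : -1 <= p <= 1) by (split; nra).
  assert (Hq1 : Cmod q <= 1) by nra.
  destruct Htheta as [Hq _].
  split; [|split; auto].
  repeat split.
  - apply sqrt_sqrt; lra.
  - apply sqrt_sqrt; lra.
  - rewrite <- sqrt_mult by lra.
    replace ((1 + p) * (1 - p)) with (Cmod q ^ 2) by lra. rewrite sqrt_pow2; auto.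
  - pose proof (f_equal cre Hq) as E. simpl in E. rewrite E at 1. ring.
  - pose proof (f_equal cim Hq) as E. simpl in E. rewrite E at 1. ring.
Qed.

Lemma coin_good (a1 a2 : Z -> R) (b : Z -> Cx)
  (Hab1 : forall x, a1 x ^ 2 + Cmod (b x) ^ 2 = 1)
  (Hab2 : forall x, a2 x ^ 2 + Cmod (b x) ^ 2 = 1) : coin_ok a1 a2 b.
Proof.
  intro x. specialize (Hab1 x); specialize (Hab2 x). rewrite Cmod_sq in *.
  pose proof (Cnorm2_nonneg (b x)). repeat split; nra.
Qed.

Lemma dim_is_ext {V : NSpace} (P Q : V -> Prop) n : (forall x, P x <-> Q x) -> dim_is P n -> dim_is Q n.
Proof.
  intros H (vs & Hl & HF & Hi & Hs). exists vs; repeat split; auto.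
  - eapply Forall_impl; [|exact HF]. intros; apply H; auto.
  - intros f Hf; apply Hs, H; auto.
Qed.

Lemma Qop_zero p q a1 a2 b : Qop p q a1 a2 b vzero = vzero.
Proof.
  apply (pair_ext (_ : Seq2) (_ : Seq2)); intro x; apply Cx_ext;
    unfold Qop, Gam, Coin, vsub, ssub, sadd, ssc, smul, Lsh, Lsh_adj, szero, C0; simpl; ring.
Qed.

Lemma Qblock_j1 p q th a1 a2 b g : Qblock p q th a1 a2 b (j1 g) = j2 (Qeps_p p q th a1 a2 b g).
Proof. unfold Qblock, j1, j2; simpl. unfold Qeps_m. rewrite Qeps_zero; auto. Qed.
Lemma Qblock_j2 p q th a1 a2 b g : Qblock p q th a1 a2 b (j2 g) = j1 (Qeps_m p q th a1 a2 b g).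
Proof. unfold Qblock, j1, j2; simpl. unfold Qeps_p. rewrite Qeps_zero; auto. Qed.

Theorem theorem3p1 (p : R) (q : Cx) (theta : R) (a1 a2 : Z -> R) (b : Z -> Cx)
  (Hq : q <> C0)
  (Hpq : p ^ 2 + Cmod q ^ 2 = 1)
  (Htheta : Arg_is q theta)
  (Hab1 : forall x, a1 x ^ 2 + Cmod (b x) ^ 2 = 1)
  (Hab2 : forall x, a2 x ^ 2 + Cmod (b x) ^ 2 = 1)
  (Hb : forall x, Cmul (b x) (RtoC (a1 x + a2 x)) = C0) :
  unitary (epsop p theta) /\
  (forall f g : Sp2, l2 f -> l2 g ->
     exists z, inner_is (Qop p q a1 a2 b (epsop p theta f)) (epsop p theta g) z /\
               inner_is (Qblock p q theta a1 a2 b f) g z) /\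
  (SUSY_Fredholm p q a1 a2 b <-> Fredholm (@l2 Sp1) (@l2 Sp1) (Qeps_p p q theta a1 a2 b)) /\
  (SUSY_Fredholm p q a1 a2 b ->
     exists (n1 n2 k1 k2 : nat) (k : Z),
       dim_is (kerHplus p q a1 a2 b) n1 /\ dim_is (kerHminus p q a1 a2 b) n2 /\
       index_is (@l2 Sp1) (@l2 Sp1) (Qeps_p p q theta a1 a2 b) k /\
       dim_is (kernel (@l2 Sp1) (Qeps_p p q theta a1 a2 b)) k1 /\
       dim_is (kernel (@l2 Sp1) (Qeps_m p q theta a1 a2 b)) k2 /\
       (Z.of_nat n1 - Z.of_nat n2)%Z = k /\
       k = (Z.of_nat k1 - Z.of_nat k2)%Z).
Proof.
  destruct (params_good p q theta Hpq Htheta) as (G & Hp & Hq1).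
  pose proof G as (G1 & G2 & _).
  pose proof (coin_good a1 a2 b Hab1 Hab2) as Hc.
  pose proof (lp_eps p theta G1 G2) as Le.
  set (Tp := Qeps_p p q theta a1 a2 b). set (Tm := Qeps_m p q theta a1 a2 b).
  assert (OTp : opT Tp).
  { split; [apply Qeps_l2; auto; lra|apply Qeps_lin|apply Qeps_zero]. }
  assert (OTm : opT Tm).
  { split; [apply Qeps_l2; auto; lra|apply Qeps_lin|apply Qeps_zero]. }
  assert (Hadj : adjrel Tp Tm) by (intros g h Sg Sh; apply adjoint; auto).
  assert (QB_l2 : forall f : Sp2, l2 f -> l2 (Qblock p q theta a1 a2 b f)).
  { intros f Hf. apply l2_2 in Hf. apply l2_2. unfold Qblock; simpl. split; [apply OTm|apply OTp]; tauto. }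
  assert (FA : Fredholm Dp Dm (Qblock p q theta a1 a2 b) <-> SUSY_Fredholm p q a1 a2 b).
  { apply (tr_fredholm Dp Dm (Hplus p q) (Hminus p q) _ _ _ _ _ _ (iso_eps_p p q theta G) (iso_eps_m p q theta G)).
    - intro x; apply eps_Qop; auto.
    - apply closed_Hminus with theta; auto. }
  assert (FB : Fredholm (@l2 Sp1) (@l2 Sp1) Tp <-> Fredholm Dp Dm (Qblock p q theta a1 a2 b)).
  { apply (tr_fredholm (@l2 Sp1) (@l2 Sp1) Dp Dm _ _ _ _ _ _ iso_j1 iso_j2).
    - intro x; apply Qblock_j1.
    - apply closed_Dm. }
  split; [|split; [|split]].
  -
    split; [|split; [|split]].
    + intros c f g. rewrite (lp_add _ _ Le), (lp_sc _ _ Le); auto.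
    + intros f Hf; apply eps_l2; auto.
    + intros g Hg. exists (epsinv p theta g); split; [apply epsinv_l2; auto|apply eps_epsinv; auto].
    + intros f g z Hf Hg Hz. apply inner_iff in Hz; [|apply csumm_W2; auto].
      apply inner_iff; [apply csumm_W2; apply eps_l2; auto|]. rewrite eps_W2; auto.
  - intros f g Hf Hg. exists (CSsum (W2 (Qblock p q theta a1 a2 b f) g)). split.
    + rewrite (eps_Qop p q theta a1 a2 b G). apply inner_iff.
      * apply csumm_W2; apply eps_l2; auto.
      * rewrite eps_W2; auto.
    + apply inner_iff; auto. apply csumm_W2; auto.
  - unfold SUSY_Fredholm. rewrite <- FA, <- FB. reflexivity.
  - intro HF. apply FA, FB in HF. destruct HF as (Hm & Hbd & [k1 Hk1] & Hcl & [c Hcd]).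
    assert (Hk2 : dim_is (kernel (@l2 Sp1) Tm) c) by (apply (duality Tp Tm OTp OTm Hadj Hcl c Hcd)).
    assert (KP : dim_is (kernel (Hplus p q) (Qop p q a1 a2 b)) k1).
    { apply (tr_kernel Dp (Hplus p q) (Qblock p q theta a1 a2 b) (Qop p q a1 a2 b) _ _ _ _ (iso_eps_p p q theta G) Le); [intro; apply eps_Qop; auto|].
      apply (tr_kernel (@l2 Sp1) Dp Tp (Qblock p q theta a1 a2 b) _ _ _ _ iso_j1 lp_j2); [intro; apply Qblock_j1|]. auto. }
    assert (KM : dim_is (kernel (Hminus p q) (Qop p q a1 a2 b)) c).
    { apply (tr_kernel Dm (Hminus p q) (Qblock p q theta a1 a2 b) (Qop p q a1 a2 b) _ _ _ _ (iso_eps_m p q theta G) Le); [intro; apply eps_Qop; auto|].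
      apply (tr_kernel (@l2 Sp1) Dm Tm (Qblock p q theta a1 a2 b) _ _ _ _ iso_j2 lp_j1); [intro; apply Qblock_j2|]. auto. }
    exists k1, c, k1, c, (Z.of_nat k1 - Z.of_nat c)%Z. repeat split; auto.
    + eapply dim_is_ext; [|exact KP]. intro f. unfold kerHplus, kernel. split.
      * intros [Hf Ef]. split; auto. rewrite Ef. apply Qop_zero.
      * intros [Hf Ef]. split; auto.
        set (g := fst (epsinv p theta f)).
        assert (Ef' : f = epsop p theta (j1 g)).
        { unfold g. rewrite (i_right _ _ _ _ iso_j1). 
          - symmetry; apply eps_epsinv; auto.
          - apply (iso_eps_p p q theta G); auto. }
        assert (Sg : summ (n2 g)) by (apply l2_1; unfold g; apply (iso_j1); apply (iso_eps_p p q theta G); auto).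
        rewrite Ef' in Ef |- *. rewrite (eps_Qop p q theta a1 a2 b G), Qblock_j1 in Ef |- *.
        rewrite (eps_Qop p q theta a1 a2 b G), Qblock_j2 in Ef.
        apply (f_equal (epsinv p theta)) in Ef. rewrite epsinv_eps, (lpi_zero _ _ Le) in Ef by auto.
        apply (f_equal fst) in Ef. simpl in Ef.
        assert (E0 : Tp g = szero) by (apply (ker_adj1 Tp Tm OTp OTm Hadj); auto).
        unfold Tp in E0. rewrite E0. apply (lp_zero _ _ Le).
    + eapply dim_is_ext; [|exact KM]. intro f. unfold kerHminus, kernel. split.
      * intros [Hf Ef]. split; auto. rewrite Ef. apply Qop_zero.
      * intros [Hf Ef]. split; auto.
        set (g := snd (epsinv p theta f)).
        assert (Ef' : f = epsop p theta (j2 g)).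
        { unfold g. rewrite (i_right _ _ _ _ iso_j2). 
          - symmetry; apply eps_epsinv; auto.
          - apply (iso_eps_m p q theta G); auto. }
        assert (Sg : summ (n2 g)) by (apply l2_1; unfold g; apply (iso_j2); apply (iso_eps_m p q theta G); auto).
        rewrite Ef' in Ef |- *. rewrite (eps_Qop p q theta a1 a2 b G), Qblock_j2 in Ef |- *.
        rewrite (eps_Qop p q theta a1 a2 b G), Qblock_j1 in Ef.
        apply (f_equal (epsinv p theta)) in Ef. rewrite epsinv_eps, (lpi_zero _ _ Le) in Ef by auto.
        apply (f_equal snd) in Ef. simpl in Ef.
        assert (E0 : Tm g = szero) by (apply (ker_adj2 Tp Tm OTp OTm Hadj); auto).
        unfold Tm in E0. rewrite E0. apply (lp_zero _ _ Le).
    + exists k1, c. repeat split; auto.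
Qed.
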